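(* Let ${\bf u}:D_1\to\mathbb{C}^2$ be the map of the General Construction with $r_n=2^{-n+1}$ (so $r_1=1$), $p(n)=n$, and $F(n)=2^{n^2/2}$. Then ${\bf u}$ is smooth on $D_1$, vanishes to infinite order at the origin ($\|z^{-k}{\bf u}(z)\|\to 0$ as $z\to 0$ for every $k\ge 0$), ${\bf u}_z(z)\ne 0$ for $z\ne 0$, and there is a constant $C_1>0$ such that $$\frac{\|{\bf u}_{\bar z}(z)\|}{\|{\bf u}_z(z)\|}\le \frac{C_1}{-\log_2|z|}\quad\text{for all } z\in D_1\setminus\{0\}.$$
   Context: General Construction. Fix a smooth function $s:\mathbb{R}\to\mathbb{R}$ with $s\equiv 0$ on $[0,\tfrac14]$, $s$ increasing on $[\tfrac14,\tfrac34]$, $s(\tfrac12)=\tfrac12$, $s'(\tfrac12)=2$, $s''(\tfrac12)=0$, and $s\equiv 1$ on $[\tfrac34,1]$. Let $(r_n)_{n\ge 1}$ be a strictly decreasing sequence of positive reals with limit $0$, put $\Delta r_n=r_n-r_{n+1}$, let $D_{r_1}=\{|z|<r_1\}$, and let $A_n=\{z\in\mathbb{C}: r_{n+1}\le |z|\le r_n\}$. Define $\chi_n(z)=s\!\left(\frac{|z|-r_{n+1}}{\Delta r_n}\right)$ on $A_n$. Let $p(n)$ ($n\ge 0$) be an increasing sequence of nonnegative integers and $F(n)$ ($n\ge 0$) positive reals. Define ${\bf u}=(u^1,u^2):D_{r_1}\to\mathbb{C}^2$ by ${\bf u}(0)=(0,0)$ and, on $A_n$ with $n$ even, $u^1(z)=F(n)z^{p(n)}$,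 $u^2(z)=\chi_n(z)F(n-1)z^{p(n-1)}+(1-\chi_n(z))F(n+1)z^{p(n+1)}$; on $A_n$ with $n$ odd, the same formulas with the roles of $u^1$ and $u^2$ interchanged. ${\bf u}_z=(u^1_z,u^2_z)$, ${\bf u}_{\bar z}=(u^1_{\bar z},u^2_{\bar z})$ with $\partial_z=\frac12(\partial_x-i\partial_y)$, $\partial_{\bar z}=\frac12(\partial_x+i\partial_y)$; $\|\cdot\|$ is the Euclidean norm on $\mathbb{C}^2$. *)

(* Defs.v *)
From Stdlib Require Import Reals Lra.
Open Scope R_scope.

Definition Cx := (R * R)%type.
Definition C0 : Cx := (0, 0).
Definition Cadd (a b : Cx) : Cx := (fst a + fst b, snd a + snd b).
Definition Cmul (a b : Cx) : Cx :=
  (fst a * fst b - snd a * snd b, fst a * snd b + snd a * fst b).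
Definition Cscal (c : R) (a : Cx) : Cx := (c * fst a, c * snd a).
Fixpoint Cpow (a : Cx) (n : nat) : Cx :=
  match n with O => (1, 0) | S m => Cmul a (Cpow a m) end.
Definition Ci : Cx := (0, 1).
Definition Cnorm2 (a : Cx) : R := fst a ^ 2 + snd a ^ 2.
Definition C2norm (a b : Cx) : R := sqrt (Cnorm2 a + Cnorm2 b).

Definition Rnorm (x y : R) : R := sqrt (x ^ 2 + y ^ 2).

Definition cutoff (s : R -> R) : Prop :=
  exists d : nat -> R -> R,
    d O = s /\
    (forall n x, derivable_pt_lim (d n) x (d (S n) x)) /\
    (forall x, 0 <= x <= 1/4 -> s x = 0) /\
    (forall a b, 1/4 <= a -> a < b -> b <= 3/4 -> s a < s b) /\
    s (1/2) = 1/2 /\ d 1%nat (1/2) = 2 /\ d 2%nat (1/2) = 0 /\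
    (forall x, 3/4 <= x <= 1 -> s x = 1).

Definition chi (s : R -> R) (r : nat -> R) (n : nat) (x y : R) : R :=
  s ((Rnorm x y - r (S n)) / (r n - r (S n))).

Definition uA (s : R -> R) (r : nat -> R) (p : nat -> nat) (F : nat -> R)
    (n : nat) (x y : R) : Cx * Cx :=
  let z : Cx := (x, y) in
  let ch := chi s r n x y in
  let a := Cscal (F n) (Cpow z (p n)) in
  let b := Cadd (Cscal (ch * F (n - 1)%nat) (Cpow z (p (n - 1)%nat)))
                (Cscal ((1 - ch) * F (S n)) (Cpow z (p (S n)))) in
  if Nat.even n then (a, b) else (b, a).

Definition GC_map (s : R -> R) (r : nat -> R) (p : nat -> nat) (F : nat -> R)
    (u : R -> R -> Cx * Cx) : Prop :=
  u 0 0 = (C0, C0) /\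
  forall (n : nat) (x y : R), (1 <= n)%nat ->
    r (S n) <= Rnorm x y <= r n -> u x y = uA s r p F n x y.

Definition r4 (n : nat) : R := 2 / 2 ^ n.
Definition p4 (n : nat) : nat := n.
Definition F4 (n : nat) : R := Rpower 2 (INR n * INR n / 2).

Definition D1 (x y : R) : Prop := Rnorm x y < 1.

Definition cont2_at (f : R -> R -> R) (x y : R) : Prop :=
  forall eps, 0 < eps -> exists delta, 0 < delta /\
    forall x' y', Rnorm (x' - x) (y' - y) < delta -> Rabs (f x' y' - f x y) < eps.

Fixpoint Ck (k : nat) (U : R -> R -> Prop) (f : R -> R -> R) : Prop :=
  match k with
  | O => forall x y, U x y -> cont2_at f x y
  | S k' => (forall x y, U x y -> cont2_at f x y) /\
      exists fx fy : R -> R -> R,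
        (forall x y, U x y ->
           derivable_pt_lim (fun t => f t y) x (fx x y) /\
           derivable_pt_lim (fun t => f x t) y (fy x y)) /\
        Ck k' U fx /\ Ck k' U fy
  end.

Definition smooth2 (U : R -> R -> Prop) (f : R -> R -> R) : Prop :=
  forall k, Ck k U f.

Definition smooth_map (U : R -> R -> Prop) (u : R -> R -> Cx * Cx) : Prop :=
  smooth2 U (fun x y => fst (fst (u x y))) /\
  smooth2 U (fun x y => snd (fst (u x y))) /\
  smooth2 U (fun x y => fst (snd (u x y))) /\
  smooth2 U (fun x y => snd (snd (u x y))).

Definition has_dx (f : R -> R -> Cx) (x y : R) (l : Cx) : Prop :=
  derivable_pt_lim (fun t => fst (f t y)) x (fst l) /\
  derivable_pt_lim (fun t => snd (f t y)) x (snd l).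
Definition has_dy (f : R -> R -> Cx) (x y : R) (l : Cx) : Prop :=
  derivable_pt_lim (fun t => fst (f x t)) y (fst l) /\
  derivable_pt_lim (fun t => snd (f x t)) y (snd l).

Definition Wz (fx fy : Cx) : Cx := Cscal (1/2) (Cadd fx (Cscal (-1) (Cmul Ci fy))).
Definition Wzbar (fx fy : Cx) : Cx := Cscal (1/2) (Cadd fx (Cmul Ci fy)).

Definition u1 (u : R -> R -> Cx * Cx) : R -> R -> Cx := fun x y => fst (u x y).
Definition u2 (u : R -> R -> Cx * Cx) : R -> R -> Cx := fun x y => snd (u x y).

Definition vanishes_inf_order (u : R -> R -> Cx * Cx) : Prop :=
  forall k : nat, forall eps, 0 < eps -> exists delta, 0 < delta /\
    forall x y, D1 x y -> 0 < Rnorm x y < delta ->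
      C2norm (fst (u x y)) (snd (u x y)) / (Rnorm x y) ^ k < eps.

(* Main.v *)
Require Import Defs.
From Stdlib Require Import Reals Lra Lia Psatz ClassicalEpsilon ZArith.
Open Scope R_scope.


Lemma Rnorm_nonneg x y : 0 <= Rnorm x y.
Proof. unfold Rnorm; apply sqrt_pos. Qed.

Lemma Rnorm_sq x y : Rnorm x y * Rnorm x y = x^2 + y^2.
Proof. unfold Rnorm; rewrite sqrt_sqrt; nra. Qed.

Lemma Rnorm_ge_x x y : Rabs x <= Rnorm x y.
Proof.
  pose proof (Rnorm_sq x y). pose proof (Rnorm_nonneg x y).
  apply Rsqr_incr_0_var; [|auto]. rewrite <- Rsqr_abs. unfold Rsqr; nra.
Qed.

Lemma Rnorm_ge_y x y : Rabs y <= Rnorm x y.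
Proof.
  pose proof (Rnorm_sq x y). pose proof (Rnorm_nonneg x y).
  apply Rsqr_incr_0_var; [|auto]. rewrite <- Rsqr_abs. unfold Rsqr; nra.
Qed.

Lemma Rnorm_x0 x : Rnorm x 0 = Rabs x.
Proof.
  unfold Rnorm. replace (x^2+0^2) with (Rsqr x) by (unfold Rsqr; ring).
  apply sqrt_Rsqr_abs.
Qed.

Lemma Rnorm_le_sum x y : Rnorm x y <= Rabs x + Rabs y.
Proof.
  pose proof (Rnorm_sq x y). pose proof (Rnorm_nonneg x y).
  apply Rsqr_incr_0_var.
  - unfold Rsqr. rewrite H. pose proof (Rabs_pos x). pose proof (Rabs_pos y).
    replace (x^2) with (Rabs x * Rabs x) by (rewrite <- Rabs_mult; rewrite Rabs_right; nra).
    replace (y^2) with (Rabs y * Rabs y) by (rewrite <- Rabs_mult; rewrite Rabs_right; nra).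
    nra.
  - pose proof (Rabs_pos x). pose proof (Rabs_pos y). lra.
Qed.

Lemma Rnorm_triangle a b c d : Rnorm (a+c) (b+d) <= Rnorm a b + Rnorm c d.
Proof.
  pose proof (Rnorm_sq a b). pose proof (Rnorm_sq c d). pose proof (Rnorm_sq (a+c) (b+d)).
  pose proof (Rnorm_nonneg a b). pose proof (Rnorm_nonneg c d). pose proof (Rnorm_nonneg (a+c) (b+d)).
  apply Rsqr_incr_0_var; [|lra]. unfold Rsqr.
  assert (a*c+b*d <= Rnorm a b * Rnorm c d).
  { destruct (Rle_dec (a*c+b*d) 0). nra.
    apply Rsqr_incr_0_var; [|nra]. unfold Rsqr.
    replace (Rnorm a b * Rnorm c d * (Rnorm a b * Rnorm c d)) with
      ((Rnorm a b * Rnorm a b) * (Rnorm c d * Rnorm c d)) by ring.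
    rewrite H, H0. pose proof (pow2_ge_0 (a*d-b*c)). nra. }
  nra.
Qed.

Lemma Rnorm_opp a b : Rnorm (-a) (-b) = Rnorm a b.
Proof. unfold Rnorm. f_equal. ring. Qed.

Lemma Rnorm_diff x y x' y' : Rabs (Rnorm x' y' - Rnorm x y) <= Rnorm (x'-x) (y'-y).
Proof.
  pose proof (Rnorm_triangle (x'-x) (y'-y) x y) as H1.
  replace (x'-x+x) with x' in H1 by ring. replace (y'-y+y) with y' in H1 by ring.
  pose proof (Rnorm_triangle (x-x') (y-y') x' y') as H2.
  replace (x-x'+x') with x in H2 by ring. replace (y-y'+y') with y in H2 by ring.
  replace (Rnorm (x-x') (y-y')) with (Rnorm (x'-x) (y'-y)) in H2
    by (rewrite <- Rnorm_opp; f_equal; ring).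
  apply Rabs_le; lra.
Qed.

Lemma Rnorm_pos_sq x y : 0 < Rnorm x y -> 0 < x^2 + y^2.
Proof. intro H. rewrite <- Rnorm_sq. nra. Qed.

Lemma Cnorm2_mul a b : Cnorm2 (Cmul a b) = Cnorm2 a * Cnorm2 b.
Proof. destruct a, b; unfold Cnorm2, Cmul; simpl; ring. Qed.

Lemma Cnorm2_pow z p : Cnorm2 (Cpow z p) = (Cnorm2 z) ^ p.
Proof. induction p; simpl. unfold Cnorm2; simpl; ring. rewrite Cnorm2_mul, IHp; ring. Qed.

Lemma Cnorm2_xy x y : Cnorm2 (x,y) = Rnorm x y ^ 2.
Proof. unfold Cnorm2; cbn [fst snd]. rewrite <- Rnorm_sq. ring. Qed.

Lemma sqrt_Cnorm2_pow x y p : sqrt (Cnorm2 (Cpow (x,y) p)) = Rnorm x y ^ p.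
Proof.
  rewrite Cnorm2_pow, Cnorm2_xy, <- pow_mult, Nat.mul_comm, pow_mult.
  rewrite sqrt_pow2; auto. apply pow_le, Rnorm_nonneg.
Qed.

Lemma Cabs_fst (a : Cx) : Rabs (fst a) <= sqrt (Cnorm2 a).
Proof. destruct a as [p q]. unfold Cnorm2; cbn [fst snd]. apply (Rnorm_ge_x p q). Qed.
Lemma Cabs_snd (a : Cx) : Rabs (snd a) <= sqrt (Cnorm2 a).
Proof. destruct a as [p q]. unfold Cnorm2; cbn [fst snd]. apply (Rnorm_ge_y p q). Qed.

Lemma Cpow_fst_bound x y p : Rabs (fst (Cpow (x,y) p)) <= Rnorm x y ^ p.
Proof. rewrite <- sqrt_Cnorm2_pow. apply Cabs_fst. Qed.
Lemma Cpow_snd_bound x y p : Rabs (snd (Cpow (x,y) p)) <= Rnorm x y ^ p.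
Proof. rewrite <- sqrt_Cnorm2_pow. apply Cabs_snd. Qed.

Lemma dpl_val f x l l' : derivable_pt_lim f x l -> l = l' -> derivable_pt_lim f x l'.
Proof. intros H ->; exact H. Qed.

Lemma dpl_cst f x c : (forall t, f t = c) -> derivable_pt_lim f x 0.
Proof. intro H. apply (derivable_pt_lim_ext (fct_cte c)). intro; rewrite H; reflexivity.
  apply derivable_pt_lim_const. Qed.

Lemma Cpow_dx x y p :
  derivable_pt_lim (fun t => fst (Cpow (t,y) p)) x (INR p * fst (Cpow (x,y) (p-1))) /\
  derivable_pt_lim (fun t => snd (Cpow (t,y) p)) x (INR p * snd (Cpow (x,y) (p-1))).
Proof.
  induction p as [|p [IH1 IH2]].
  - split; eapply dpl_val; [apply (dpl_cst _ _ 1); intro; reflexivity | simpl; ring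
                           | apply (dpl_cst _ _ 0); intro; reflexivity | simpl; ring].
  - assert (Hf : derivable_pt_lim (fun t => t * fst (Cpow (t,y) p) - y * snd (Cpow (t,y) p)) x
                 (1 * fst (Cpow (x,y) p) + x * (INR p * fst (Cpow (x,y) (p-1))) - y * (INR p * snd (Cpow (x,y) (p-1))))).
    { apply (derivable_pt_lim_minus (fun t => t * fst (Cpow (t,y) p)) (fun t => y * snd (Cpow (t,y) p))).
      apply (derivable_pt_lim_mult id (fun t => fst (Cpow (t,y) p))). apply derivable_pt_lim_id. auto.
      apply (derivable_pt_lim_scal (fun t => snd (Cpow (t,y) p))). auto. }
    assert (Hg : derivable_pt_lim (fun t => t * snd (Cpow (t,y) p) + y * fst (Cpow (t,y) p)) x
                 (1 * snd (Cpow (x,y) p) + x * (INR p * snd (Cpow (x,y) (p-1))) + y * (INR p * fst (Cpow (x,y) (p-1))))).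
    { apply (derivable_pt_lim_plus (fun t => t * snd (Cpow (t,y) p)) (fun t => y * fst (Cpow (t,y) p))).
      apply (derivable_pt_lim_mult id (fun t => snd (Cpow (t,y) p))). apply derivable_pt_lim_id. auto.
      apply (derivable_pt_lim_scal (fun t => fst (Cpow (t,y) p))). auto. }
    replace (S p - 1)%nat with p by lia.
    split; [eapply derivable_pt_lim_ext; [|eapply dpl_val; [exact Hf|]]
           |eapply derivable_pt_lim_ext; [|eapply dpl_val; [exact Hg|]]];
      try (intro; reflexivity).
    + destruct p as [|q]; [cbn [INR Cpow fst snd Nat.sub Cmul]; ring|].
      replace (S q - 1)%nat with q by lia. rewrite !S_INR. simpl Cpow. unfold Cmul; cbn [fst snd]. ring.
    + destruct p as [|q]; [cbn [INR Cpow fst snd Nat.sub Cmul]; ring|].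
      replace (S q - 1)%nat with q by lia. rewrite !S_INR. simpl Cpow. unfold Cmul; cbn [fst snd]. ring.
Qed.

Lemma Cpow_dy x y p :
  derivable_pt_lim (fun t => fst (Cpow (x,t) p)) y (- (INR p * snd (Cpow (x,y) (p-1)))) /\
  derivable_pt_lim (fun t => snd (Cpow (x,t) p)) y (INR p * fst (Cpow (x,y) (p-1))).
Proof.
  induction p as [|p [IH1 IH2]].
  - split; eapply dpl_val; [apply (dpl_cst _ _ 1); intro; reflexivity | simpl; ring
                           | apply (dpl_cst _ _ 0); intro; reflexivity | simpl; ring].
  - assert (Hf : derivable_pt_lim (fun t => x * fst (Cpow (x,t) p) - t * snd (Cpow (x,t) p)) y
                 (x * (- (INR p * snd (Cpow (x,y) (p-1)))) - (1 * snd (Cpow (x,y) p) + y * (INR p * fst (Cpow (x,y) (p-1)))))).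
    { apply (derivable_pt_lim_minus (fun t => x * fst (Cpow (x,t) p)) (fun t => t * snd (Cpow (x,t) p))).
      apply (derivable_pt_lim_scal (fun t => fst (Cpow (x,t) p))). auto.
      apply (derivable_pt_lim_mult id (fun t => snd (Cpow (x,t) p))). apply derivable_pt_lim_id. auto. }
    assert (Hg : derivable_pt_lim (fun t => x * snd (Cpow (x,t) p) + t * fst (Cpow (x,t) p)) y
                 (x * (INR p * fst (Cpow (x,y) (p-1))) + (1 * fst (Cpow (x,y) p) + y * (- (INR p * snd (Cpow (x,y) (p-1))))))).
    { apply (derivable_pt_lim_plus (fun t => x * snd (Cpow (x,t) p)) (fun t => t * fst (Cpow (x,t) p))).
      apply (derivable_pt_lim_scal (fun t => snd (Cpow (x,t) p))). auto.
      apply (derivable_pt_lim_mult id (fun t => fst (Cpow (x,t) p))). apply derivable_pt_lim_id. auto. }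
    replace (S p - 1)%nat with p by lia.
    split; [eapply derivable_pt_lim_ext; [|eapply dpl_val; [exact Hf|]]
           |eapply derivable_pt_lim_ext; [|eapply dpl_val; [exact Hg|]]];
      try (intro; reflexivity).
    + destruct p as [|q]; [cbn [INR Cpow fst snd Nat.sub Cmul]; ring|].
      replace (S q - 1)%nat with q by lia. rewrite !S_INR. simpl Cpow. unfold Cmul; cbn [fst snd]. ring.
    + destruct p as [|q]; [cbn [INR Cpow fst snd Nat.sub Cmul]; ring|].
      replace (S q - 1)%nat with q by lia. rewrite !S_INR. simpl Cpow. unfold Cmul; cbn [fst snd]. ring.
Qed.

Lemma dpl_local f g x l d : 0 < d -> (forall t, Rabs (t - x) < d -> f t = g t) ->
  derivable_pt_lim f x l -> derivable_pt_lim g x l.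
Proof.
  intros Hd H Hf. apply (derivable_pt_lim_locally_ext f g x (x-d) (x+d)); auto. lra.
  intros z Hz. apply H. apply Rabs_def1; lra.
Qed.

Lemma dpl_unique_local f g x l1 l2 d : 0 < d -> (forall t, Rabs (t - x) < d -> f t = g t) ->
  derivable_pt_lim f x l1 -> derivable_pt_lim g x l2 -> l1 = l2.
Proof. intros. eapply uniqueness_limite; [eapply dpl_local|]; eauto. Qed.

Lemma mvt_bound f f' a b M :
  (forall c, Rmin a b <= c <= Rmax a b -> derivable_pt_lim f c (f' c)) ->
  (forall c, Rmin a b <= c <= Rmax a b -> Rabs (f' c) <= M) ->
  Rabs (f b - f a) <= M * Rabs (b - a).
Proof.
  intros Hd Hb. destruct (Rtotal_order a b) as [Hab|[Hab|Hab]].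
  - destruct (MVT_cor2 f f' a b Hab) as [c [Hc1 Hc2]].
    { intros c Hc; apply Hd. unfold Rmin, Rmax; destruct (Rle_dec a b); lra. }
    rewrite Hc1, Rabs_mult. apply Rmult_le_compat_r. apply Rabs_pos.
    apply Hb. unfold Rmin, Rmax; destruct (Rle_dec a b); lra.
  - subst. replace (f b - f b) with 0 by ring. rewrite Rabs_R0.
    replace (b - b) with 0 by ring. rewrite Rabs_R0. lra.
  - destruct (MVT_cor2 f f' b a Hab) as [c [Hc1 Hc2]].
    { intros c Hc; apply Hd. unfold Rmin, Rmax; destruct (Rle_dec a b); lra. }
    rewrite <- Rabs_Ropp. replace (- (f b - f a)) with (f a - f b) by ring.
    rewrite <- (Rabs_Ropp (b - a)). replace (- (b - a)) with (a - b) by ring.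
    rewrite Hc1, Rabs_mult. apply Rmult_le_compat_r. apply Rabs_pos.
    apply Hb. unfold Rmin, Rmax; destruct (Rle_dec a b); lra.
Qed.

Lemma cont_from_partials (G gx gy : R -> R -> R) x y d M :
  0 < d ->
  (forall a b, Rnorm (a - x) (b - y) < d ->
     derivable_pt_lim (fun t => G t b) a (gx a b) /\
     derivable_pt_lim (fun t => G a t) b (gy a b) /\
     Rabs (gx a b) <= M /\ Rabs (gy a b) <= M) ->
  cont2_at G x y.
Proof.
  intros Hd H eps Heps.
  assert (HM : 0 <= M).
  { assert (Hxy: Rnorm (x-x) (y-y) < d) by (rewrite !Rminus_diag, Rnorm_x0, Rabs_R0; auto).
    destruct (H x y Hxy) as [_ [_ [HM _]]].
    pose proof (Rabs_pos (gx x y)); lra. }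
  exists (Rmin (d/2) (eps / (2*(M+1)))). split.
  { apply Rmin_pos. lra. apply Rdiv_lt_0_compat; lra. }
  intros x' y' Hn.
  assert (Hm1 : Rmin (d/2) (eps / (2*(M+1))) <= d/2) by apply Rmin_l.
  assert (Hm2 : Rmin (d/2) (eps / (2*(M+1))) <= eps / (2*(M+1))) by apply Rmin_r.
  pose proof (Rnorm_ge_x (x'-x) (y'-y)). pose proof (Rnorm_ge_y (x'-x) (y'-y)).
  set (e := Rmin (d/2) (eps / (2*(M+1)))) in *.
  assert (HA1 : Rabs (G x' y' - G x y') <= M * Rabs (x' - x)).
  { apply (mvt_bound (fun t => G t y') (fun t => gx t y')).
    - intros c Hc. apply (H c y'). eapply Rle_lt_trans. apply Rnorm_le_sum.
      assert (Rabs (c - x) <= Rabs (x'-x)).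
      { unfold Rmin, Rmax in Hc; destruct (Rle_dec x x'); apply Rabs_le; split;
        try (rewrite Rabs_right; lra); try (rewrite Rabs_left1; lra);
        try (rewrite Rabs_right in *; lra); rewrite Rabs_left1; lra. }
      lra.
    - intros c Hc. apply (H c y'). eapply Rle_lt_trans. apply Rnorm_le_sum.
      assert (Rabs (c - x) <= Rabs (x'-x)).
      { unfold Rmin, Rmax in Hc; destruct (Rle_dec x x'); apply Rabs_le; split;
        try (rewrite Rabs_right; lra); try (rewrite Rabs_left1; lra);
        try (rewrite Rabs_right in *; lra); rewrite Rabs_left1; lra. }
      lra. }
  assert (HA2 : Rabs (G x y' - G x y) <= M * Rabs (y' - y)).
  { apply (mvt_bound (fun t => G x t) (fun t => gy x t)).
    - intros c Hc. apply (H x c). rewrite Rminus_diag. eapply Rle_lt_trans. apply Rnorm_le_sum.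
      rewrite Rabs_R0.
      assert (Rabs (c - y) <= Rabs (y'-y)).
      { unfold Rmin, Rmax in Hc; destruct (Rle_dec y y'); apply Rabs_le; split;
        try (rewrite Rabs_right; lra); try (rewrite Rabs_left1; lra);
        try (rewrite Rabs_right in *; lra); rewrite Rabs_left1; lra. }
      lra.
    - intros c Hc. apply (H x c). rewrite Rminus_diag. eapply Rle_lt_trans. apply Rnorm_le_sum.
      rewrite Rabs_R0.
      assert (Rabs (c - y) <= Rabs (y'-y)).
      { unfold Rmin, Rmax in Hc; destruct (Rle_dec y y'); apply Rabs_le; split;
        try (rewrite Rabs_right; lra); try (rewrite Rabs_left1; lra);
        try (rewrite Rabs_right in *; lra); rewrite Rabs_left1; lra. }
      lra. }
  replace (G x' y' - G x y) with ((G x' y' - G x y') + (G x y' - G x y)) by ring.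
  eapply Rle_lt_trans. apply Rabs_triang.
  assert (M * Rabs (x'-x) + M * Rabs (y'-y) <= M * (2*e)) by nra.
  assert (M * (2 * e) <= M * (eps / (M+1))).
  { apply Rmult_le_compat_l; auto. unfold Rdiv in *. rewrite Rinv_mult in Hm2. lra. }
  assert (M * (eps / (M+1)) < eps).
  { assert (eps / (M+1) * (M+1) = eps) by (field; lra).
    assert (0 < eps / (M+1)) by (apply Rdiv_lt_0_compat; lra). nra. }
  lra.
Qed.

Section Cut.
Variable d : nat -> R -> R.
Hypothesis Hd : forall n x, derivable_pt_lim (d n) x (d (S n) x).
Hypothesis Hz : forall x, 0 <= x <= 1/4 -> d 0%nat x = 0.
Hypothesis Ho : forall x, 3/4 <= x <= 1 -> d 0%nat x = 1.

Lemma zero_deriv_open f f' a b c : (forall x, derivable_pt_lim f x (f' x)) ->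
  (forall x, a < x < b -> f x = c) -> forall x, a < x < b -> f' x = 0.
Proof.
  intros Hf Hc x Hx.
  apply (dpl_unique_local f (fun _ => c) x (f' x) 0 (Rmin (x-a) (b-x))).
  apply Rmin_pos; lra.
  intros t Ht. apply Hc. pose proof (Rmin_l (x-a) (b-x)). pose proof (Rmin_r (x-a) (b-x)).
  apply Rabs_def2 in Ht. lra.
  auto. apply (dpl_cst _ _ c); auto.
Qed.

Lemma cont_zero_left f a e : 0 < e -> continuity_pt f a -> (forall x, a - e < x < a -> f x = 0) -> f a = 0.
Proof.
  intros He Hc H. destruct (Req_dec (f a) 0) as [|Hne]; auto. exfalso.
  assert (Hp : 0 < Rabs (f a)) by (apply Rabs_pos_lt; auto).
  destruct (Hc (Rabs (f a)) Hp) as [del [Hdel Hx]].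
  set (x := a - Rmin (del/2) (e/2)).
  assert (Hm1 : Rmin (del/2) (e/2) <= del/2) by apply Rmin_l.
  assert (Hm2 : Rmin (del/2) (e/2) <= e/2) by apply Rmin_r.
  assert (Hm0 : 0 < Rmin (del/2) (e/2)) by (apply Rmin_pos; lra).
  specialize (Hx x). simpl in Hx. unfold R_dist in Hx.
  rewrite H in Hx by (unfold x; lra).
  assert (Rabs (0 - f a) < Rabs (f a)).
  { apply Hx. split. unfold D_x, no_cond. split; auto. unfold x; lra.
    unfold x. rewrite Rabs_left; lra. }
  rewrite Rabs_minus_sym, Rminus_0_r in H0. lra.
Qed.

Lemma cont_zero_right f a e : 0 < e -> continuity_pt f a -> (forall x, a < x < a + e -> f x = 0) -> f a = 0.
Proof.
  intros He Hc H. destruct (Req_dec (f a) 0) as [|Hne]; auto. exfalso.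
  assert (Hp : 0 < Rabs (f a)) by (apply Rabs_pos_lt; auto).
  destruct (Hc (Rabs (f a)) Hp) as [del [Hdel Hx]].
  set (x := a + Rmin (del/2) (e/2)).
  assert (Hm1 : Rmin (del/2) (e/2) <= del/2) by apply Rmin_l.
  assert (Hm2 : Rmin (del/2) (e/2) <= e/2) by apply Rmin_r.
  assert (Hm0 : 0 < Rmin (del/2) (e/2)) by (apply Rmin_pos; lra).
  specialize (Hx x). simpl in Hx. unfold R_dist in Hx.
  rewrite H in Hx by (unfold x; lra).
  assert (Rabs (0 - f a) < Rabs (f a)).
  { apply Hx. split. unfold D_x, no_cond. split; auto. unfold x; lra.
    unfold x. rewrite Rabs_right; lra. }
  rewrite Rabs_minus_sym, Rminus_0_r in H0. lra.
Qed.

Lemma d_cont k x : continuity_pt (d k) x.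
Proof. apply derivable_continuous_pt. exists (d (S k) x). apply Hd. Qed.

Lemma d_low k x : 0 < x < 1/4 -> d (S k) x = 0.
Proof.
  revert x. induction k; intros x Hx.
  - apply (zero_deriv_open (d 0) (d 1) 0 (1/4) 0); auto. intros; apply Hz; lra.
  - apply (zero_deriv_open (d (S k)) (d (S (S k))) 0 (1/4) 0); auto.
Qed.

Lemma d_high k x : 3/4 < x < 1 -> d (S k) x = 0.
Proof.
  revert x. induction k; intros x Hx.
  - apply (zero_deriv_open (d 0) (d 1) (3/4) 1 1); auto. intros; apply Ho; lra.
  - apply (zero_deriv_open (d (S k)) (d (S (S k))) (3/4) 1 0); auto.
Qed.

Lemma d_q1 k : d k (1/4) = 0.
Proof.
  destruct k. apply Hz; lra.
  apply (cont_zero_left (d (S k)) (1/4) (1/4)). lra. apply d_cont.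
  intros; apply d_low; lra.
Qed.

Lemma d_q3 k : d (S k) (3/4) = 0.
Proof.
  apply (cont_zero_right (d (S k)) (3/4) (1/4)). lra. apply d_cont.
  intros; apply d_high; lra.
Qed.

Definition dt (k : nat) (t : R) : R :=
  if Rlt_dec t (1/4) then 0 else if Rlt_dec (3/4) t then (match k with O => 1 | _ => 0 end) else d k t.

Lemma dt_mid k t : 1/4 <= t <= 3/4 -> dt k t = d k t.
Proof. intro. unfold dt. destruct (Rlt_dec t (1/4)); [lra|]. destruct (Rlt_dec (3/4) t); [lra|]. auto. Qed.

Lemma dt_s t : 0 <= t <= 1 -> dt 0 t = d 0 t.
Proof.
  intro. unfold dt. destruct (Rlt_dec t (1/4)). rewrite Hz; lra.
  destruct (Rlt_dec (3/4) t). rewrite Ho; lra. auto.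
Qed.

Lemma dt_lo k t : t < 1/4 -> dt k t = 0.
Proof. intro. unfold dt. destruct (Rlt_dec t (1/4)); [auto|lra]. Qed.

Lemma dt0_hi t : 3/4 < t -> dt 0 t = 1.
Proof. intro. unfold dt. destruct (Rlt_dec t (1/4)); [lra|]. destruct (Rlt_dec (3/4) t); [auto|lra]. Qed.

Lemma dt_hi k t : 3/4 < t -> dt k t = match k with O => 1 | _ => 0 end.
Proof. intro. unfold dt. destruct (Rlt_dec t (1/4)); [lra|]. destruct (Rlt_dec (3/4) t); [auto|lra]. Qed.

Lemma glue_deriv f g x0 e : 0 < e -> derivable_pt_lim g x0 0 -> f x0 = g x0 ->
  (forall t, Rabs (t - x0) < e -> f t = g t \/ f t = f x0) -> derivable_pt_lim f x0 0.
Proof.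
  intros He Hg Hf0 H eps Heps. destruct (Hg eps Heps) as [del Hdel].
  assert (Hp : 0 < Rmin del e) by (apply Rmin_pos; [apply cond_pos|lra]).
  exists (mkposreal _ Hp). intros h Hh0 Hh. simpl in Hh.
  pose proof (Rmin_l del e). pose proof (Rmin_r del e).
  destruct (H (x0 + h)) as [E|E].
  { replace (x0 + h - x0) with h by ring. lra. }
  - rewrite E, Hf0. apply Hdel; auto. lra.
  - rewrite E. replace ((f x0 - f x0)/h - 0) with 0 by (field; auto). rewrite Rabs_R0; auto.
Qed.

Lemma dt_deriv k t : derivable_pt_lim (dt k) t (dt (S k) t).
Proof.
  destruct (Rtotal_order t (1/4)) as [H1|[H1|H1]].
  - rewrite dt_lo by lra. apply (dpl_local (fun _ => 0) _ _ _ (1/4 - t)). lra.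
    intros u Hu. apply Rabs_def2 in Hu. rewrite dt_lo; auto; lra.
    apply (dpl_cst _ _ 0); auto.
  - subst. rewrite dt_mid by lra. rewrite d_q1.
    apply (glue_deriv _ (d k) _ (1/4)). lra. rewrite <- (d_q1 (S k)). apply Hd.
    apply dt_mid; lra.
    intros u Hu. apply Rabs_def2 in Hu. destruct (Rlt_dec u (1/4)).
    right. rewrite dt_lo, dt_mid, d_q1; lra. left. apply dt_mid; lra.
  - destruct (Rtotal_order t (3/4)) as [H2|[H2|H2]].
    + rewrite dt_mid by lra. apply (dpl_local (d k) _ _ _ (Rmin (t-1/4) (3/4-t))).
      apply Rmin_pos; lra.
      intros u Hu. apply Rabs_def2 in Hu. pose proof (Rmin_l (t-1/4) (3/4-t)).
      pose proof (Rmin_r (t-1/4) (3/4-t)). rewrite dt_mid; auto; lra. apply Hd.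
    + subst. rewrite dt_mid by lra. rewrite d_q3.
      apply (glue_deriv _ (d k) _ (1/4)). lra. rewrite <- (d_q3 k). apply Hd.
      apply dt_mid; lra.
      intros u Hu. apply Rabs_def2 in Hu. destruct (Rlt_dec (3/4) u).
      * right. rewrite dt_hi, dt_mid by lra. destruct k. rewrite Ho; lra. rewrite d_q3; auto.
      * left. apply dt_mid; lra.
    + rewrite dt_hi by lra. apply (dpl_local (fun _ => match k with O => 1 | _ => 0 end) _ _ _ (t - 3/4)). lra.
      intros u Hu. apply Rabs_def2 in Hu. rewrite dt_hi; auto; lra.
      apply (dpl_cst _ _ (match k with O => 1 | _ => 0 end)); auto.
Qed.

Lemma dt_bounded k : exists M, 0 <= M /\ forall t, Rabs (dt k t) <= M.
Proof.
  destruct (continuity_ab_maj (d k) (1/4) (3/4)) as [a [Ha1 Ha2]]. lra. intros; apply d_cont.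
  destruct (continuity_ab_maj (fun t => - d k t) (1/4) (3/4)) as [b [Hb1 Hb2]]. lra.
  intros; apply continuity_pt_opp; apply d_cont.
  exists (1 + Rabs (d k a) + Rabs (d k b)). split.
  pose proof (Rabs_pos (d k a)); pose proof (Rabs_pos (d k b)); lra.
  intro t. pose proof (Rabs_pos (d k a)); pose proof (Rabs_pos (d k b)).
  destruct (Rlt_dec t (1/4)). rewrite dt_lo, Rabs_R0; lra.
  destruct (Rlt_dec (3/4) t). rewrite dt_hi by lra. destruct k; [rewrite Rabs_R1|rewrite Rabs_R0]; lra.
  rewrite dt_mid by lra. specialize (Ha1 t). specialize (Hb1 t).
  apply Rabs_le. split.
  - assert (- d k t <= - d k b) by (apply Hb1; lra). pose proof (Rabs_Ropp (d k b)).
    pose proof (Rle_abs (- d k b)). lra.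
  - assert (d k t <= d k a) by (apply Ha1; lra). pose proof (Rle_abs (d k a)). lra.
Qed.
End Cut.

Lemma Rnorm_dx x y : 0 < Rnorm x y -> derivable_pt_lim (fun t => Rnorm t y) x (x / Rnorm x y).
Proof.
  intro Hp. pose proof (Rnorm_pos_sq x y Hp).
  unfold Rnorm at 1. eapply dpl_val.
  apply (derivable_pt_lim_comp (fun t => t^2 + y^2) sqrt).
  apply (derivable_pt_lim_plus (fun t => t^2) (fun _ => y^2)).
  apply derivable_pt_lim_pow. apply (dpl_cst _ _ (y^2)); auto.
  apply derivable_pt_lim_sqrt. auto.
  unfold Rnorm. simpl. field. apply Rgt_not_eq. apply sqrt_lt_R0. nra.
Qed.

Lemma Rnorm_dy x y : 0 < Rnorm x y -> derivable_pt_lim (fun t => Rnorm x t) y (y / Rnorm x y).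
Proof.
  intro Hp. pose proof (Rnorm_pos_sq x y Hp).
  unfold Rnorm at 1. eapply dpl_val.
  apply (derivable_pt_lim_comp (fun t => x^2 + t^2) sqrt).
  apply (derivable_pt_lim_plus (fun _ => x^2) (fun t => t^2)).
  apply (dpl_cst _ _ (x^2)); auto. apply derivable_pt_lim_pow.
  apply derivable_pt_lim_sqrt. auto.
  unfold Rnorm. simpl. field. apply Rgt_not_eq. apply sqrt_lt_R0. nra.
Qed.

Lemma inv_deriv f x l : derivable_pt_lim f x l -> f x <> 0 ->
  derivable_pt_lim (fun t => / f t) x (- l / (f x * f x)).
Proof.
  intros Hf Hn. eapply derivable_pt_lim_ext; [|eapply dpl_val].
  2: apply (derivable_pt_lim_div (fct_cte 1) f x 0 l); auto; apply derivable_pt_lim_const.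
  intro; unfold fct_cte, div_fct, Rdiv; ring.
  unfold fct_cte, Rsqr; field; auto.
Qed.

Lemma INR_le_pow2 p : INR p <= 2 ^ p.
Proof.
  induction p. simpl; lra. rewrite S_INR. simpl.
  destruct p. simpl; lra. assert (1 <= 2 ^ S p) by (apply pow_R1_Rle; lra). lra.
Qed.

Lemma pow2_pos m : 0 < 2 ^ m.
Proof. apply pow_lt; lra. Qed.
Lemma pow2_ge1 m : 1 <= 2 ^ m.
Proof. apply pow_R1_Rle; lra. Qed.

Lemma pow2_mono a b : (a <= b)%nat -> 2 ^ a <= 2 ^ b.
Proof. intro. apply Rle_pow; auto; lra. Qed.

Lemma pow2_Rpower m : 2 ^ m = Rpower 2 (INR m).
Proof. rewrite Rpower_pow; auto; lra. Qed.

Definition inE (n : nat) (x y : R) : Prop := 3/4 / 2^n < Rnorm x y < 5/2 / 2^n.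
Definition Wt (n : nat) : R := Rpower 2 (- (INR n * INR n) / 2).
Definition Fam := nat -> R -> R -> R.

Lemma inE_pos n x y : inE n x y -> 0 < Rnorm x y.
Proof. unfold inE. intros [H _]. pose proof (pow2_pos n).
  assert (0 < 3/4/2^n) by (apply Rdiv_lt_0_compat; lra). lra. Qed.

Lemma inE_open n x y : inE n x y -> exists e, 0 < e /\ forall a b, Rnorm (a - x) (b - y) < e -> inE n a b.
Proof.
  unfold inE. intros [H1 H2].
  exists (Rmin (Rnorm x y - 3/4/2^n) (5/2/2^n - Rnorm x y)). split. apply Rmin_pos; lra.
  intros a b Hab. pose proof (Rnorm_diff x y a b).
  pose proof (Rmin_l (Rnorm x y - 3/4/2^n) (5/2/2^n - Rnorm x y)).
  pose proof (Rmin_r (Rnorm x y - 3/4/2^n) (5/2/2^n - Rnorm x y)).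
  assert (Rabs (Rnorm a b - Rnorm x y) < Rmin (Rnorm x y - 3/4/2^n) (5/2/2^n - Rnorm x y)) by lra.
  apply Rabs_def2 in H4. lra.
Qed.

Lemma inE_open_x n x y : inE n x y -> exists e, 0 < e /\ forall t, Rabs (t - x) < e -> inE n t y.
Proof. intro H. destruct (inE_open n x y H) as [e [He H']]. exists e; split; auto.
  intros t Ht. apply H'. rewrite Rminus_diag, Rnorm_x0; auto. Qed.

Lemma inE_open_y n x y : inE n x y -> exists e, 0 < e /\ forall t, Rabs (t - y) < e -> inE n x t.
Proof. intro H. destruct (inE_open n x y H) as [e [He H']]. exists e; split; auto.
  intros t Ht. apply H'. rewrite Rminus_diag. unfold Rnorm. replace (0^2 + (t-y)^2) with ((t-y)^2+0^2) by ring.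
  fold (Rnorm (t-y) 0). rewrite Rnorm_x0; auto. Qed.

Lemma Rpower_pow_gen a p : (Rpower 2 a) ^ p = Rpower 2 (a * INR p).
Proof. rewrite <- Rpower_pow by (apply exp_pos). rewrite Rpower_mult; auto. Qed.

Lemma Fw_core n j k : (1<=n)%nat -> (k <= n+j-1)%nat ->
  F4 (n+j-1) * (5/2 / 2^n)^(n+j-1-k) <= 2^(j*j+2*j) * 2^((k+2)*n) * Wt n.
Proof.
  intros Hn Hk.
  assert (HN : INR (n+j-1) = INR n + INR j - 1).
  { destruct n as [|m]; [lia|]. replace (S m + j - 1)%nat with (m+j)%nat by lia.
    rewrite plus_INR, S_INR; ring. }
  assert (Hp : INR (n+j-1-k) = INR n + INR j - 1 - INR k) by (rewrite minus_INR by lia; lra).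
  assert (H4 : 5/2 / 2^n <= Rpower 2 (2 - INR n)).
  { assert (E : Rpower 2 (2 - INR n) = 4 / 2^n).
    { unfold Rminus. rewrite Rpower_plus, Rpower_Ropp. replace 2 with (1+1) at 2 by ring.
      rewrite Rpower_plus, Rpower_1 by lra. rewrite Rpower_pow by lra. unfold Rdiv. ring. }
    rewrite E. unfold Rdiv. apply Rmult_le_compat_r. left; apply Rinv_0_lt_compat, pow2_pos. lra. }
  assert (H5 : 0 <= 5/2 / 2^n) by (pose proof (pow2_pos n); apply Rlt_le, Rdiv_lt_0_compat; lra).
  eapply Rle_trans.
  { apply Rmult_le_compat_l. unfold F4; left; apply exp_pos.
    apply pow_incr. split. exact H5. exact H4. }
  rewrite Rpower_pow_gen. unfold F4, Wt. rewrite <- Rpower_plus.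
  rewrite !pow2_Rpower, <- !Rpower_plus.
  apply Rle_Rpower. lra.
  rewrite HN, Hp, !plus_INR, !mult_INR, plus_INR. simpl INR.
  assert (1 <= INR n) by (apply (le_INR 1); lia).
  assert (0 <= INR j) by apply pos_INR.
  assert (INR k <= INR n + INR j - 1) by (rewrite <- HN; apply le_INR; lia).
  pose proof (pos_INR k). nra.
Qed.

Lemma Wt_pos n : 0 < Wt n.
Proof. unfold Wt, Rpower. apply exp_pos. Qed.

Lemma pow_mn_add m1 m2 n : 2 ^ ((m1+m2)*n) = 2^(m1*n) * 2^(m2*n).
Proof. rewrite Nat.mul_add_distr_r, pow_add; auto. Qed.

Lemma bnd_add a b K1 K2 m1 m2 n X : 0 <= X -> 0 <= K1 -> 0 <= K2 ->
  Rabs a <= K1 * 2^(m1*n) * X -> Rabs b <= K2 * 2^(m2*n) * X ->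
  Rabs (a + b) <= (K1+K2) * 2^((m1+m2)*n) * X.
Proof.
  intros HX HK1 HK2 Ha Hb. rewrite pow_mn_add.
  pose proof (pow2_ge1 (m1*n)). pose proof (pow2_ge1 (m2*n)).
  eapply Rle_trans. apply Rabs_triang.
  assert (K1 * 2^(m1*n) * X <= K1 * (2^(m1*n) * 2^(m2*n)) * X).
  { apply Rmult_le_compat_r; auto. apply Rmult_le_compat_l; auto. nra. }
  assert (K2 * 2^(m2*n) * X <= K2 * (2^(m1*n) * 2^(m2*n)) * X).
  { apply Rmult_le_compat_r; auto. apply Rmult_le_compat_l; auto. nra. }
  nra.
Qed.

Lemma bnd_mul a b K1 K2 m1 m2 n X1 X2 : 0 <= K1 ->
  Rabs a <= K1 * 2^(m1*n) * X1 -> Rabs b <= K2 * 2^(m2*n) * X2 ->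
  Rabs (a * b) <= (K1*K2) * 2^((m1+m2)*n) * (X1 * X2).
Proof.
  intros HK1 Ha Hb. rewrite pow_mn_add, Rabs_mult.
  replace (K1 * K2 * (2 ^ (m1 * n) * 2 ^ (m2 * n)) * (X1 * X2)) with
    ((K1 * 2^(m1*n) * X1) * (K2 * 2^(m2*n) * X2)) by ring.
  apply Rmult_le_compat; auto; apply Rabs_pos.
Qed.

Section Cls.
Variable d : nat -> R -> R.
Hypothesis Hd : forall n x, derivable_pt_lim (d n) x (d (S n) x).
Hypothesis Hz : forall x, 0 <= x <= 1/4 -> d 0%nat x = 0.
Hypothesis Ho : forall x, 3/4 <= x <= 1 -> d 0%nat x = 1.

Definition cbd (c : nat -> R) := exists K m, 0 <= K /\ forall n, (1<=n)%nat -> Rabs (c n) <= K * 2^(m*n).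

Inductive Tame : Fam -> Prop :=
| Tc c : cbd c -> Tame (fun n _ _ => c n)
| TX : Tame (fun _ x _ => x)
| TY : Tame (fun _ _ y => y)
| TI : Tame (fun _ x y => / Rnorm x y)
| TS j : Tame (fun n x y => dt d j (2^n * Rnorm x y - 1))
| Tp a b : Tame a -> Tame b -> Tame (fun n x y => a n x y + b n x y)
| Tm a b : Tame a -> Tame b -> Tame (fun n x y => a n x y * b n x y)
| Te a b : Tame a -> (forall n x y, (1<=n)%nat -> inE n x y -> b n x y = a n x y) -> Tame b.

Definition PDs (G Gx Gy : Fam) := forall n x y, (1<=n)%nat -> inE n x y ->
  derivable_pt_lim (fun t => G n t y) x (Gx n x y) /\ derivable_pt_lim (fun t => G n x t) y (Gy n x y).

Definition Bd (X : nat -> R) (G : Fam) := exists K m, 0 <= K /\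
  forall n x y, (1<=n)%nat -> inE n x y -> Rabs (G n x y) <= K * 2^(m*n) * X n.

Lemma cbd_const r : cbd (fun _ => r).
Proof. exists (Rabs r), 0%nat. split. apply Rabs_pos. intros; simpl; lra. Qed.

Lemma PDs_ext a b ax ay : PDs a ax ay -> (forall n x y, (1<=n)%nat -> inE n x y -> b n x y = a n x y) ->
  PDs b ax ay.
Proof.
  intros H E n x y Hn Hx. destruct (H n x y Hn Hx) as [H1 H2]. split.
  - destruct (inE_open_x n x y Hx) as [e [He He']].
    apply (dpl_local (fun t => a n t y) _ _ _ e He); auto. intros; rewrite E; auto.
  - destruct (inE_open_y n x y Hx) as [e [He He']].
    apply (dpl_local (fun t => a n x t) _ _ _ e He); auto. intros; rewrite E; auto.
Qed.

Lemma tame_prop G : Tame G -> Bd (fun _ => 1) G /\ exists Gx Gy, Tame Gx /\ Tame Gy /\ PDs G Gx Gy.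
Proof.
  induction 1.
  - split. destruct H as [K [m [HK H]]]. exists K, m. split; auto. intros; rewrite Rmult_1_r; auto.
    exists (fun _ _ _ => 0), (fun _ _ _ => 0). split; [|split]; try apply Tc, cbd_const.
    intros n x y _ _. split; apply (dpl_cst _ _ (c n)); auto.
  - split. exists (5/2), 0%nat. split. lra. intros n x y Hn [_ Hx]. simpl.
    pose proof (Rnorm_ge_x x y). pose proof (pow2_ge1 n).
    assert (5/2/2^n <= 5/2). { unfold Rdiv. rewrite <- (Rmult_1_r (5/2)) at 2.
      apply Rmult_le_compat_l. lra. rewrite <- Rinv_1. apply Rinv_le_contravar; lra. } lra.
    exists (fun _ _ _ => 1), (fun _ _ _ => 0). split; [|split]; try apply Tc, cbd_const.
    intros n x y _ _. split. apply derivable_pt_lim_id. apply (dpl_cst _ _ x); auto.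
  - split. exists (5/2), 0%nat. split. lra. intros n x y Hn [_ Hx]. simpl.
    pose proof (Rnorm_ge_y x y). pose proof (pow2_ge1 n).
    assert (5/2/2^n <= 5/2). { unfold Rdiv. rewrite <- (Rmult_1_r (5/2)) at 2.
      apply Rmult_le_compat_l. lra. rewrite <- Rinv_1. apply Rinv_le_contravar; lra. } lra.
    exists (fun _ _ _ => 0), (fun _ _ _ => 1). split; [|split]; try apply Tc, cbd_const.
    intros n x y _ _. split. apply (dpl_cst _ _ y); auto. apply derivable_pt_lim_id.
  - split. exists (4/3), 1%nat. split. lra. intros n x y Hn Hx.
    pose proof (inE_pos n x y Hx). destruct Hx as [Hx _]. rewrite Rmult_1_r, Nat.mul_1_l.
    rewrite Rabs_right by (left; apply Rinv_0_lt_compat; auto).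
    pose proof (pow2_pos n).
    replace (4/3 * 2^n) with (/ (3/4/2^n)) by (field; lra).
    apply Rinv_le_contravar. apply Rdiv_lt_0_compat; lra. lra.
    exists (fun _ x y => -1 * (x * (/ Rnorm x y * (/ Rnorm x y * / Rnorm x y)))),
           (fun _ x y => -1 * (y * (/ Rnorm x y * (/ Rnorm x y * / Rnorm x y)))).
    split; [|split].
    + apply Tm. apply Tc, cbd_const. apply Tm. apply TX. apply Tm. apply TI. apply Tm; apply TI.
    + apply Tm. apply Tc, cbd_const. apply Tm. apply TY. apply Tm. apply TI. apply Tm; apply TI.
    + intros n x y Hn Hx. pose proof (inE_pos n x y Hx). split.
      * eapply dpl_val. apply (inv_deriv (fun t => Rnorm t y)). apply Rnorm_dx; auto. lra.
        field; lra.
      * eapply dpl_val. apply (inv_deriv (fun t => Rnorm x t)). apply Rnorm_dy; auto. lra.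
        field; lra.
  - split. destruct (dt_bounded d Hd j) as [M [HM HMb]].
    exists M, 0%nat. split; auto. intros. simpl. rewrite !Rmult_1_r. auto.
    exists (fun n x y => dt d (S j) (2^n * Rnorm x y - 1) * (2^n * (x * / Rnorm x y))),
           (fun n x y => dt d (S j) (2^n * Rnorm x y - 1) * (2^n * (y * / Rnorm x y))).
    assert (Hc : cbd (fun n => 2^n)).
    { exists 1, 1%nat. split. lra. intros. rewrite Nat.mul_1_l, Rabs_right. lra.
      left; apply pow2_pos. }
    split; [|split].
    + apply Tm. apply TS. apply (Tm (fun n _ _ => 2^n)). apply Tc; auto. apply Tm. apply TX. apply TI.
    + apply Tm. apply TS. apply (Tm (fun n _ _ => 2^n)). apply Tc; auto. apply Tm. apply TY. apply TI.
    + intros n x y Hn Hx. pose proof (inE_pos n x y Hx). split.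
      * eapply dpl_val. apply (derivable_pt_lim_comp (fun t => 2^n * Rnorm t y - 1) (dt d j)).
        apply (derivable_pt_lim_minus (fun t => 2^n * Rnorm t y) (fun _ => 1)).
        apply (derivable_pt_lim_scal (fun t => Rnorm t y)). apply Rnorm_dx; auto.
        apply (dpl_cst _ _ 1); auto. apply dt_deriv; auto. unfold Rdiv. ring.
      * eapply dpl_val. apply (derivable_pt_lim_comp (fun t => 2^n * Rnorm x t - 1) (dt d j)).
        apply (derivable_pt_lim_minus (fun t => 2^n * Rnorm x t) (fun _ => 1)).
        apply (derivable_pt_lim_scal (fun t => Rnorm x t)). apply Rnorm_dy; auto.
        apply (dpl_cst _ _ 1); auto. apply dt_deriv; auto. unfold Rdiv. ring.
  - destruct IHTame1 as [[K1 [m1 [HK1 B1]]] [ax [ay [Ta1 [Ta2 Pa]]]]].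
    destruct IHTame2 as [[K2 [m2 [HK2 B2]]] [bx [by' [Tb1 [Tb2 Pb]]]]].
    split. exists (K1+K2), (m1+m2)%nat. split. lra. intros. apply bnd_add; auto; lra.
    exists (fun n x y => ax n x y + bx n x y), (fun n x y => ay n x y + by' n x y).
    split; [apply Tp; auto|split; [apply Tp; auto|]].
    intros n x y Hn Hx. destruct (Pa n x y Hn Hx). destruct (Pb n x y Hn Hx). split.
    apply (derivable_pt_lim_plus (fun t => a n t y) (fun t => b n t y)); auto.
    apply (derivable_pt_lim_plus (fun t => a n x t) (fun t => b n x t)); auto.
  - destruct IHTame1 as [[K1 [m1 [HK1 B1]]] [ax [ay [Ta1 [Ta2 Pa]]]]].
    destruct IHTame2 as [[K2 [m2 [HK2 B2]]] [bx [by' [Tb1 [Tb2 Pb]]]]].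
    split. exists (K1*K2), (m1+m2)%nat. split. nra. intros. rewrite <- (Rmult_1_r 1). apply bnd_mul; auto.
    exists (fun n x y => ax n x y * b n x y + a n x y * bx n x y),
           (fun n x y => ay n x y * b n x y + a n x y * by' n x y).
    split; [apply Tp; apply Tm; auto|split; [apply Tp; apply Tm; auto|]].
    intros n x y Hn Hx. destruct (Pa n x y Hn Hx). destruct (Pb n x y Hn Hx). split.
    apply (derivable_pt_lim_mult (fun t => a n t y) (fun t => b n t y)); auto.
    apply (derivable_pt_lim_mult (fun t => a n x t) (fun t => b n x t)); auto.
  - destruct IHTame as [[K [m [HK B]]] [ax [ay [Ta1 [Ta2 Pa]]]]]. split.
    exists K, m. split; auto. intros. rewrite H0; auto.
    exists ax, ay. split; auto. split; auto. eapply PDs_ext; eauto.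
Qed.
End Cls.

Section Fl.
Variable d : nat -> R -> R.
Hypothesis Hd : forall n x, derivable_pt_lim (d n) x (d (S n) x).
Hypothesis Hz : forall x, 0 <= x <= 1/4 -> d 0%nat x = 0.
Hypothesis Ho : forall x, 3/4 <= x <= 1 -> d 0%nat x = 1.

Definition cp (re : bool) (z : Cx) : R := if re then fst z else snd z.

Inductive Flat : Fam -> Prop :=
| Fw j k c (re : bool) : cbd c -> (forall n, (n + j - 1 < k)%nat -> c n = 0) ->
    Flat (fun n x y => c n * F4 (n+j-1) * cp re (Cpow (x,y) (n+j-1-k)))
| Fp a b : Flat a -> Flat b -> Flat (fun n x y => a n x y + b n x y)
| Fm a b : Flat a -> Tame d b -> Flat (fun n x y => a n x y * b n x y)
| Fpar a b : Flat a -> Flat b -> Flat (fun n x y => if Nat.even n then a n x y else b n x y)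
| Fe a b : Flat a -> (forall n x y, (1<=n)%nat -> inE n x y -> b n x y = a n x y) -> Flat b.

Lemma Kpos K a X : 0 <= K -> 0 <= X -> 0 <= K * 2^a * X.
Proof. intros. pose proof (pow2_pos a). apply Rmult_le_pos; auto. apply Rmult_le_pos; lra. Qed.

Lemma cbd_INR c j k : cbd c -> cbd (fun n => c n * INR (n+j-1-k)).
Proof.
  intros [K [m [HK H]]]. exists K, (m + S j)%nat. split; auto. intros n Hn.
  rewrite Rabs_mult, (Rabs_right (INR _)) by (apply Rle_ge, pos_INR).
  rewrite pow_mn_add, <- Rmult_assoc. apply Rmult_le_compat; auto. apply Rabs_pos. apply pos_INR.
  eapply Rle_trans. apply INR_le_pow2. apply pow2_mono. nia.
Qed.

Lemma cbd_opp c : cbd c -> cbd (fun n => - c n).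
Proof. intros [K [m [HK H]]]. exists K, m. split; auto. intros. rewrite Rabs_Ropp; auto. Qed.

Lemma zero_INR c j k : (forall n, (n + j - 1 < k)%nat -> c n = 0) ->
  forall n, (n + j - 1 < S k)%nat -> c n * INR (n+j-1-k) = 0.
Proof.
  intros H n Hn. destruct (Nat.lt_ge_cases (n+j-1) k). rewrite H; auto; ring.
  replace (n+j-1-k)%nat with 0%nat by lia. simpl; ring.
Qed.

Lemma Fw_bound j k c re : cbd c -> (forall n, (n + j - 1 < k)%nat -> c n = 0) ->
  Bd Wt (fun n x y => c n * F4 (n+j-1) * cp re (Cpow (x,y) (n+j-1-k))).
Proof.
  intros [K [m [HK H]]] Hz0. exists (K * 2^(j*j+2*j)), (m + (k+2))%nat. split.
  pose proof (pow2_pos (j*j+2*j)); nra.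
  intros n x y Hn Hx. destruct (Nat.lt_ge_cases (n+j-1) k) as [Hl|Hl].
  { rewrite Hz0 by auto. rewrite !Rmult_0_l, Rabs_R0. pose proof (pow2_pos (j*j+2*j)).
    apply Kpos. apply Rmult_le_pos; lra. left; apply Wt_pos. }
  assert (Hc : Rabs (cp re (Cpow (x,y) (n+j-1-k))) <= (5/2/2^n)^(n+j-1-k)).
  { eapply Rle_trans. destruct re; [apply Cpow_fst_bound|apply Cpow_snd_bound].
    apply pow_incr. split. apply Rnorm_nonneg. destruct Hx; lra. }
  pose proof (Fw_core n j k Hn Hl).
  rewrite !Rabs_mult. rewrite (Rabs_right (F4 _)) by (unfold F4; left; apply exp_pos).
  rewrite pow_mn_add.
  assert (0 <= F4 (n+j-1)) by (unfold F4; left; apply exp_pos).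
  assert (Rabs (c n) * F4 (n+j-1) * Rabs (cp re (Cpow (x,y) (n+j-1-k))) <=
          (K * 2^(m*n)) * (F4 (n+j-1) * (5/2/2^n)^(n+j-1-k))).
  { rewrite Rmult_assoc. apply Rmult_le_compat; auto. apply Rabs_pos.
    apply Rmult_le_pos; auto; apply Rabs_pos. apply Rmult_le_compat_l; auto. }
  eapply Rle_trans. exact H2.
  pose proof (pow2_pos (m*n)).
  replace (K * 2 ^ (j * j + 2 * j) * (2 ^ (m * n) * 2 ^ ((k + 2) * n)) * Wt n) with
    ((K * 2^(m*n)) * (2 ^ (j * j + 2 * j) * 2 ^ ((k + 2) * n) * Wt n)) by ring.
  apply Rmult_le_compat_l; auto. nra.
Qed.

Lemma Fw_deriv j k c re n x y :
  derivable_pt_lim (fun t => c n * F4 (n+j-1) * cp re (Cpow (t,y) (n+j-1-k))) x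
    ((c n * INR (n+j-1-k)) * F4 (n+j-1) * cp re (Cpow (x,y) (n+j-1-S k))) /\
  derivable_pt_lim (fun t => c n * F4 (n+j-1) * cp re (Cpow (x,t) (n+j-1-k))) y
    ((if re then - (c n * INR (n+j-1-k)) else c n * INR (n+j-1-k)) * F4 (n+j-1) *
      cp (negb re) (Cpow (x,y) (n+j-1-S k))).
Proof.
  replace (n+j-1-S k)%nat with (n+j-1-k-1)%nat by lia.
  destruct (Cpow_dx x y (n+j-1-k)) as [A1 A2]. destruct (Cpow_dy x y (n+j-1-k)) as [B1 B2].
  destruct re; simpl; split; eapply dpl_val;
   try (apply (derivable_pt_lim_scal (fun t => fst (Cpow (t,y) (n+j-1-k)))); eauto);
   try (apply (derivable_pt_lim_scal (fun t => snd (Cpow (t,y) (n+j-1-k)))); eauto);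
   try (apply (derivable_pt_lim_scal (fun t => fst (Cpow (x,t) (n+j-1-k)))); eauto);
   try (apply (derivable_pt_lim_scal (fun t => snd (Cpow (x,t) (n+j-1-k)))); eauto); ring.
Qed.

Lemma flat_prop G : Flat G -> Bd Wt G /\ exists Gx Gy, Flat Gx /\ Flat Gy /\ PDs G Gx Gy.
Proof.
  induction 1.
  - split. apply Fw_bound; auto.
    exists (fun n x y => (c n * INR (n+j-1-k)) * F4 (n+j-1) * cp re (Cpow (x,y) (n+j-1-S k))),
           (fun n x y => (if re then - (c n * INR (n+j-1-k)) else c n * INR (n+j-1-k)) * F4 (n+j-1) *
                          cp (negb re) (Cpow (x,y) (n+j-1-S k))).
    split; [|split].
    + apply (Fw j (S k) (fun n => c n * INR (n+j-1-k))). apply cbd_INR; auto. apply zero_INR; auto.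
    + destruct re.
      * apply (Fw j (S k) (fun n => - (c n * INR (n+j-1-k)))). apply cbd_opp, cbd_INR; auto.
        intros. rewrite zero_INR; auto. ring.
      * apply (Fw j (S k) (fun n => c n * INR (n+j-1-k))). apply cbd_INR; auto. apply zero_INR; auto.
    + intros n x y _ _. apply Fw_deriv.
  - destruct IHFlat1 as [[K1 [m1 [HK1 B1]]] [ax [ay [Ta1 [Ta2 Pa]]]]].
    destruct IHFlat2 as [[K2 [m2 [HK2 B2]]] [bx [by' [Tb1 [Tb2 Pb]]]]].
    split. exists (K1+K2), (m1+m2)%nat. split. lra. intros. apply bnd_add; auto.
    left; apply Wt_pos.
    exists (fun n x y => ax n x y + bx n x y), (fun n x y => ay n x y + by' n x y).
    split; [apply Fp; auto|split; [apply Fp; auto|]].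
    intros n x y Hn Hx. destruct (Pa n x y Hn Hx). destruct (Pb n x y Hn Hx). split.
    apply (derivable_pt_lim_plus (fun t => a n t y) (fun t => b n t y)); auto.
    apply (derivable_pt_lim_plus (fun t => a n x t) (fun t => b n x t)); auto.
  - destruct IHFlat as [[K1 [m1 [HK1 B1]]] [ax [ay [Ta1 [Ta2 Pa]]]]].
    destruct (tame_prop d Hd Hz Ho b H0) as [[K2 [m2 [HK2 B2]]] [bx [by' [Tb1 [Tb2 Pb]]]]].
    split. exists (K1*K2), (m1+m2)%nat. split. nra. intros. rewrite <- (Rmult_1_r (Wt n)).
    apply bnd_mul; auto.
    exists (fun n x y => ax n x y * b n x y + a n x y * bx n x y),
           (fun n x y => ay n x y * b n x y + a n x y * by' n x y).
    split; [apply Fp; apply Fm; auto|split; [apply Fp; apply Fm; auto|]].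
    intros n x y Hn Hx. destruct (Pa n x y Hn Hx). destruct (Pb n x y Hn Hx). split.
    apply (derivable_pt_lim_mult (fun t => a n t y) (fun t => b n t y)); auto.
    apply (derivable_pt_lim_mult (fun t => a n x t) (fun t => b n x t)); auto.
  - destruct IHFlat1 as [[K1 [m1 [HK1 B1]]] [ax [ay [Ta1 [Ta2 Pa]]]]].
    destruct IHFlat2 as [[K2 [m2 [HK2 B2]]] [bx [by' [Tb1 [Tb2 Pb]]]]].
    split. exists (K1+K2), (m1+m2)%nat. split. lra. intros.
    assert (Hz1: Rabs 0 <= K2 * 2 ^ (m2 * n) * Wt n).
    { rewrite Rabs_R0. apply Kpos; auto. left; apply Wt_pos. }
    assert (Hz2: Rabs 0 <= K1 * 2 ^ (m1 * n) * Wt n).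
    { rewrite Rabs_R0. apply Kpos; auto. left; apply Wt_pos. }
    destruct (Nat.even n).
    rewrite <- (Rplus_0_r (a n x y)). apply bnd_add; auto. left; apply Wt_pos.
    rewrite <- (Rplus_0_l (b n x y)). apply bnd_add; auto. left; apply Wt_pos.
    exists (fun n x y => if Nat.even n then ax n x y else bx n x y),
           (fun n x y => if Nat.even n then ay n x y else by' n x y).
    split; [apply Fpar; auto|split; [apply Fpar; auto|]].
    intros n x y Hn Hx. destruct (Pa n x y Hn Hx). destruct (Pb n x y Hn Hx).
    destruct (Nat.even n); split; auto.
  - destruct IHFlat as [[K [m [HK B]]] [ax [ay [Ta1 [Ta2 Pa]]]]]. split.
    exists K, m. split; auto. intros. rewrite H0; auto.
    exists ax, ay. split; auto. split; auto. eapply PDs_ext; eauto.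
Qed.
End Fl.

Definition PDx (g : R -> R -> R) (x y : R) : R :=
  epsilon (inhabits 0) (fun l => derivable_pt_lim (fun t => g t y) x l).
Definition PDy (g : R -> R -> R) (x y : R) : R :=
  epsilon (inhabits 0) (fun l => derivable_pt_lim (fun t => g x t) y l).

Lemma PDx_spec g x y l : derivable_pt_lim (fun t => g t y) x l -> PDx g x y = l.
Proof. intro H. unfold PDx. eapply uniqueness_limite; [|exact H].
  apply (epsilon_spec (inhabits 0) (fun l => derivable_pt_lim (fun t => g t y) x l)). eauto. Qed.
Lemma PDy_spec g x y l : derivable_pt_lim (fun t => g x t) y l -> PDy g x y = l.
Proof. intro H. unfold PDy. eapply uniqueness_limite; [|exact H].
  apply (epsilon_spec (inhabits 0) (fun l => derivable_pt_lim (fun t => g x t) y l)). eauto. Qed.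

CoInductive Sm : (R -> R -> R) -> Prop :=
| SmI g : (forall x y, D1 x y -> cont2_at g x y) ->
    (forall x y, D1 x y -> derivable_pt_lim (fun t => g t y) x (PDx g x y) /\
                           derivable_pt_lim (fun t => g x t) y (PDy g x y)) ->
    Sm (PDx g) -> Sm (PDy g) -> Sm g.

Lemma Sm_Ck k : forall g, Sm g -> Ck k D1 g.
Proof.
  induction k; intros g H; destruct H as [g Hc Hd Hx Hy]; simpl; auto.
  split; auto. exists (PDx g), (PDy g). split; auto.
Qed.

Lemma Sm_smooth g : Sm g -> smooth2 D1 g.
Proof. intros H k. apply Sm_Ck; auto. Qed.

Lemma Rnorm_zero x y : Rnorm x y = 0 -> x = 0 /\ y = 0.
Proof. intro H. pose proof (Rnorm_ge_x x y). pose proof (Rnorm_ge_y x y).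
  pose proof (Rabs_pos x). pose proof (Rabs_pos y).
  split; [destruct (Req_dec x 0) as [E|E]|destruct (Req_dec y 0) as [E|E]]; auto; apply Rabs_no_R0 in E; lra. Qed.

Lemma Rnorm_00 : Rnorm 0 0 = 0.
Proof. rewrite Rnorm_x0, Rabs_R0; auto. Qed.

Lemma decay A m : forall eps, 0 < eps -> exists N, forall n, (N <= n)%nat -> A * 2^(m*n) * Wt n <= eps.
Proof.
  intros eps He.
  destruct (archimed (Rabs A / eps)) as [Ha _].
  set (N0 := Z.to_nat (up (Rabs A / eps))).
  exists (Nat.max (2*m+2) N0). intros n Hn.
  assert (HA : A * 2^(m*n) * Wt n <= Rabs A * Rpower 2 (- INR n)).
  { rewrite Rmult_assoc. eapply Rle_trans. apply Rmult_le_compat_r.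
    pose proof (pow2_pos (m*n)); pose proof (Wt_pos n); nra. apply Rle_abs.
    apply Rmult_le_compat_l. apply Rabs_pos. rewrite pow2_Rpower. unfold Wt. rewrite <- Rpower_plus.
    apply Rle_Rpower. lra. rewrite mult_INR.
    assert (INR (2*m+2) <= INR n) by (apply le_INR; lia).
    rewrite plus_INR, mult_INR in H. simpl in H. pose proof (pos_INR m). nra. }
  eapply Rle_trans. exact HA.
  rewrite Rpower_Ropp, Rpower_pow by lra.
  assert (INR N0 <= INR n) by (apply le_INR; lia).
  assert (Rabs A / eps <= INR N0).
  { unfold N0. rewrite INR_IZR_INZ, Z2Nat.id. lra. apply le_IZR.
    pose proof (Rabs_pos A). assert (0 <= Rabs A / eps) by (apply Rmult_le_pos; [auto|left; apply Rinv_0_lt_compat; auto]). lra. }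
  pose proof (INR_le_pow2 n). pose proof (pow2_pos n).
  assert (Rabs A <= eps * 2^n).
  { apply (Rmult_le_reg_r (/ eps)). apply Rinv_0_lt_compat; auto.
    replace (eps * 2^n * /eps) with (2^n) by (field; lra). unfold Rdiv in H0. lra. }
  apply (Rmult_le_reg_r (2^n)); auto. rewrite Rmult_assoc, Rinv_l by lra. lra.
Qed.

Definition Rep (g : R -> R -> R) (G : Fam) := forall x y, D1 x y -> 0 < Rnorm x y ->
  exists n e, (1<=n)%nat /\ 0 < e /\ forall a b, Rnorm (a-x) (b-y) < e -> inE n a b /\ g a b = G n a b.

Lemma Rep_pt g G x y : Rep g G -> D1 x y -> 0 < Rnorm x y -> exists n, (1<=n)%nat /\ inE n x y /\ g x y = G n x y.
Proof.
  intros H H1 H2. destruct (H x y H1 H2) as [n [e [Hn [He Hb]]]]. exists n. split; auto.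
  apply Hb. rewrite !Rminus_diag, Rnorm_00; auto.
Qed.

Lemma n_large n N x y : inE n x y -> Rnorm x y < 1 / 2^N -> (N <= n)%nat.
Proof.
  intros [H1 _] H2. destruct (Nat.le_gt_cases N n); auto. exfalso.
  assert (2^(S n) <= 2^N) by (apply pow2_mono; lia).
  simpl in H0. pose proof (pow2_pos n).
  assert (1/2^N <= 1/(2*2^n)). { unfold Rdiv. apply Rmult_le_compat_l. lra. apply Rinv_le_contravar; lra. }
  assert (1/(2*2^n) < 3/4/2^n). { unfold Rdiv. rewrite Rinv_mult. 
    apply (Rmult_lt_reg_r (2^n)); auto. field_simplify; lra. }
  lra.
Qed.

Lemma small g G : Bd Wt G -> Rep g G -> forall k eps, 0 < eps -> exists del, 0 < del /\
  forall x y, D1 x y -> 0 < Rnorm x y < del -> Rabs (g x y) <= eps * Rnorm x y ^ k.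
Proof.
  intros [K [m [HK HB]]] HR k eps He.
  destruct (decay (K * (4/3)^k) (m+k) eps He) as [N HN].
  exists (1/2^N). split. unfold Rdiv; rewrite Rmult_1_l; apply Rinv_0_lt_compat, pow2_pos.
  intros x y HD [Hp Hl]. destruct (Rep_pt g G x y HR HD Hp) as [n [Hn [HE Hg]]].
  pose proof (n_large n N x y HE Hl). rewrite Hg.
  eapply Rle_trans. apply HB; auto.
  assert (Hid : K * 2^(m*n) * Wt n = (K * (4/3)^k * 2^((m+k)*n) * Wt n) * ((3/4/2^n)^k)).
  { assert (EB : 2^(k*n) = (2^n)^k) by (rewrite Nat.mul_comm, pow_mult; auto).
    rewrite pow_mn_add, EB.
    assert (E3 : (3/4/2^n)^k = (3/4)^k * / (2^n)^k) by (unfold Rdiv; rewrite Rpow_mult_distr, pow_inv; auto).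
    rewrite E3.
    assert (E4 : (4/3)^k * (3/4)^k = 1) by (rewrite <- Rpow_mult_distr; replace (4/3*(3/4)) with 1 by field; apply pow1).
    assert (0 < (2^n)^k) by (apply pow_lt, pow2_pos).
    transitivity (K * 2^(m*n) * Wt n * ((4/3)^k * (3/4)^k) * ((2^n)^k * / (2^n)^k)).
    rewrite E4, Rinv_r by lra. ring. ring. }
  rewrite Hid. apply Rmult_le_compat. 
  - pose proof (pow2_pos ((m+k)*n)). pose proof (Wt_pos n). 
    assert (0 <= (4/3)^k) by (apply pow_le; lra). apply Rmult_le_pos; [|lra]. apply Rmult_le_pos; [|lra]. 
    apply Rmult_le_pos; lra.
  - apply pow_le. pose proof (pow2_pos n). apply Rlt_le, Rdiv_lt_0_compat; lra.
  - apply HN; auto.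
  - apply pow_incr. split. pose proof (pow2_pos n). apply Rlt_le, Rdiv_lt_0_compat; lra.
    destruct HE; lra.
Qed.

Lemma ball_line_x x y a b e t : Rnorm (a-x) (b-y) < e -> Rabs (t - a) < e - Rnorm (a-x) (b-y) ->
  Rnorm (t-x) (b-y) < e.
Proof.
  intros H1 H2. pose proof (Rnorm_triangle (t-a) 0 (a-x) (b-y)).
  replace (t-a+(a-x)) with (t-x) in H by ring. replace (0+(b-y)) with (b-y) in H by ring.
  rewrite Rnorm_x0 in H. lra.
Qed.

Lemma ball_line_y x y a b e t : Rnorm (a-x) (b-y) < e -> Rabs (t - b) < e - Rnorm (a-x) (b-y) ->
  Rnorm (a-x) (t-y) < e.
Proof.
  intros H1 H2. pose proof (Rnorm_triangle 0 (t-b) (a-x) (b-y)).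
  replace (0+(a-x)) with (a-x) in H by ring. replace (t-b+(b-y)) with (t-y) in H by ring.
  assert (Rnorm 0 (t-b) = Rabs (t-b)).
  { unfold Rnorm. replace (0^2 + (t-b)^2) with ((t-b)^2+0^2) by ring. fold (Rnorm (t-b) 0). apply Rnorm_x0. }
  lra.
Qed.

Lemma rep_deriv (g : R -> R -> R) (G Gx Gy : Fam) n x y e a b :
  PDs G Gx Gy -> (1<=n)%nat ->
  (forall a b, Rnorm (a-x) (b-y) < e -> inE n a b /\ g a b = G n a b) ->
  Rnorm (a-x) (b-y) < e ->
  derivable_pt_lim (fun t => g t b) a (Gx n a b) /\ derivable_pt_lim (fun t => g a t) b (Gy n a b).
Proof.
  intros HP Hn Hb Hab. destruct (Hb a b Hab) as [HE _]. destruct (HP n a b Hn HE) as [P1 P2].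
  split.
  - apply (dpl_local (fun t => G n t b) _ _ _ (e - Rnorm (a-x) (b-y))); [lra| |auto].
    intros t Ht. symmetry. apply Hb. apply (ball_line_x x y a b e t); auto.
  - apply (dpl_local (fun t => G n a t) _ _ _ (e - Rnorm (a-x) (b-y))); [lra| |auto].
    intros t Ht. symmetry. apply Hb. apply (ball_line_y x y a b e t); auto.
Qed.

Section Glob.
Variable d : nat -> R -> R.
Hypothesis Hd : forall n x, derivable_pt_lim (d n) x (d (S n) x).
Hypothesis Hz : forall x, 0 <= x <= 1/4 -> d 0%nat x = 0.
Hypothesis Ho : forall x, 3/4 <= x <= 1 -> d 0%nat x = 1.

Definition Q (g : R -> R -> R) := exists G, Flat d G /\ g 0 0 = 0 /\ Rep g G.

Lemma origin_dx g G : Bd Wt G -> Rep g G -> g 0 0 = 0 -> derivable_pt_lim (fun t => g t 0) 0 0.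
Proof.
  intros HB HR H0 eps He. destruct (small g G HB HR 1 (eps/2)) as [del [Hdel Hs]]. lra.
  assert (Hp : 0 < Rmin del 1) by (apply Rmin_pos; lra).
  exists (mkposreal _ Hp). intros h Hh Hl. simpl in Hl.
  pose proof (Rmin_l del 1). pose proof (Rmin_r del 1).
  rewrite Rplus_0_l, H0, Rminus_0_r, Rminus_0_r.
  assert (Hr : Rnorm h 0 = Rabs h) by apply Rnorm_x0.
  assert (Hh' : 0 < Rabs h) by (apply Rabs_pos_lt; auto).
  specialize (Hs h 0). rewrite Hr, pow_1 in Hs.
  assert (Rabs (g h 0) <= eps/2 * Rabs h) by (apply Hs; unfold D1; try rewrite Hr; lra).
  unfold Rdiv. rewrite Rabs_mult, Rabs_inv.
  apply (Rmult_lt_reg_r (Rabs h)); auto. rewrite Rmult_assoc, Rinv_l by lra. nra.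
Qed.

Lemma origin_dy g G : Bd Wt G -> Rep g G -> g 0 0 = 0 -> derivable_pt_lim (fun t => g 0 t) 0 0.
Proof.
  intros HB HR H0 eps He. destruct (small g G HB HR 1 (eps/2)) as [del [Hdel Hs]]. lra.
  assert (Hp : 0 < Rmin del 1) by (apply Rmin_pos; lra).
  exists (mkposreal _ Hp). intros h Hh Hl. simpl in Hl.
  pose proof (Rmin_l del 1). pose proof (Rmin_r del 1).
  rewrite Rplus_0_l, H0, Rminus_0_r, Rminus_0_r.
  assert (Hr : Rnorm 0 h = Rabs h).
  { unfold Rnorm. replace (0^2 + h^2) with (h^2+0^2) by ring. fold (Rnorm h 0). apply Rnorm_x0. }
  assert (Hh' : 0 < Rabs h) by (apply Rabs_pos_lt; auto).
  specialize (Hs 0 h). rewrite Hr, pow_1 in Hs.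
  assert (Rabs (g 0 h) <= eps/2 * Rabs h) by (apply Hs; unfold D1; try rewrite Hr; lra).
  unfold Rdiv. rewrite Rabs_mult, Rabs_inv.
  apply (Rmult_lt_reg_r (Rabs h)); auto. rewrite Rmult_assoc, Rinv_l by lra. nra.
Qed.

Lemma origin_cont g G : Bd Wt G -> Rep g G -> g 0 0 = 0 -> cont2_at g 0 0.
Proof.
  intros HB HR H0 eps He. destruct (small g G HB HR 0 (eps/2)) as [del [Hdel Hs]]. lra.
  exists (Rmin del 1). split. apply Rmin_pos; lra.
  intros x' y' Hl. rewrite !Rminus_0_r in Hl. rewrite H0, Rminus_0_r.
  pose proof (Rmin_l del 1). pose proof (Rmin_r del 1).
  destruct (Req_dec (Rnorm x' y') 0) as [E|E].
  - destruct (Rnorm_zero _ _ E); subst. rewrite H0, Rabs_R0; auto.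
  - pose proof (Rnorm_nonneg x' y').
    assert (Rabs (g x' y') <= eps/2 * Rnorm x' y' ^ 0) by (apply Hs; unfold D1; lra).
    simpl in H3. lra.
Qed.

Lemma Q_step g : Q g ->
  (forall x y, D1 x y -> cont2_at g x y) /\
  (forall x y, D1 x y -> derivable_pt_lim (fun t => g t y) x (PDx g x y) /\
                         derivable_pt_lim (fun t => g x t) y (PDy g x y)) /\
  Q (PDx g) /\ Q (PDy g).
Proof.
  intros [G [HF [H0 HR]]].
  destruct (flat_prop d Hd Hz Ho G HF) as [HB [Gx [Gy [HFx [HFy HP]]]]].
  destruct (flat_prop d Hd Hz Ho Gx HFx) as [HBx _].
  destruct (flat_prop d Hd Hz Ho Gy HFy) as [HBy _].
  assert (Hdx0 : PDx g 0 0 = 0) by (apply PDx_spec; apply (origin_dx g G HB HR H0)).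
  assert (Hdy0 : PDy g 0 0 = 0) by (apply PDy_spec; apply (origin_dy g G HB HR H0)).
  assert (HRd : forall x y, D1 x y -> 0 < Rnorm x y -> exists n e, (1<=n)%nat /\ 0 < e /\
            forall a b, Rnorm (a-x) (b-y) < e -> inE n a b /\ g a b = G n a b /\
              PDx g a b = Gx n a b /\ PDy g a b = Gy n a b /\
              derivable_pt_lim (fun t => g t b) a (Gx n a b) /\ derivable_pt_lim (fun t => g a t) b (Gy n a b)).
  { intros x y HD Hp. destruct (HR x y HD Hp) as [n [e [Hn [He Hb]]]]. exists n, e.
    split; auto. split; auto. intros a b Hab.
    destruct (rep_deriv g G Gx Gy n x y e a b HP Hn Hb Hab) as [D1' D2'].
    destruct (Hb a b Hab). split; auto. split; auto. split. apply PDx_spec; auto.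
    split. apply PDy_spec; auto. split; auto. }
  split; [|split; [|split]].
  - intros x y HD. destruct (Req_dec (Rnorm x y) 0) as [E|E].
    + destruct (Rnorm_zero _ _ E); subst. apply (origin_cont g G HB HR H0).
    + pose proof (Rnorm_nonneg x y).
      destruct (HRd x y HD) as [n [e [Hn [He Hb]]]]. lra.
      destruct HBx as [Kx [mx [HKx HBx']]]. destruct HBy as [Ky [my [HKy HBy']]].
      apply (cont_from_partials g (PDx g) (PDy g) x y e (Kx * 2^(mx*n) * Wt n + Ky * 2^(my*n) * Wt n)); auto.
      intros a b Hab. destruct (Hb a b Hab) as [HE [_ [E1 [E2 [P1 P2]]]]].
      rewrite E1, E2. split; auto. split; auto.
      pose proof (Kpos Kx (mx*n) (Wt n) HKx (Rlt_le _ _ (Wt_pos n))).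
      pose proof (Kpos Ky (my*n) (Wt n) HKy (Rlt_le _ _ (Wt_pos n))).
      pose proof (HBx' n a b Hn HE). pose proof (HBy' n a b Hn HE). split; lra.
  - intros x y HD. destruct (Req_dec (Rnorm x y) 0) as [E|E].
    + destruct (Rnorm_zero _ _ E); subst. rewrite Hdx0, Hdy0.
      split; [apply (origin_dx g G HB HR H0)|apply (origin_dy g G HB HR H0)].
    + pose proof (Rnorm_nonneg x y).
      destruct (HRd x y HD) as [n [e [Hn [He Hb]]]]. lra.
      assert (Hxy : Rnorm (x-x) (y-y) < e) by (rewrite !Rminus_diag, Rnorm_00; auto).
      destruct (Hb x y Hxy) as [_ [_ [E1 [E2 [P1 P2]]]]]. rewrite E1, E2; auto.
  - exists Gx. split; auto. split; auto. intros x y HD Hp.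
    destruct (HRd x y HD Hp) as [n [e [Hn [He Hb]]]]. exists n, e. split; auto. split; auto.
    intros a b Hab. destruct (Hb a b Hab) as [HE [_ [E1 _]]]. auto.
  - exists Gy. split; auto. split; auto. intros x y HD Hp.
    destruct (HRd x y HD Hp) as [n [e [Hn [He Hb]]]]. exists n, e. split; auto. split; auto.
    intros a b Hab. destruct (Hb a b Hab) as [HE [_ [_ [E2 _]]]]. auto.
Qed.

Lemma Q_Sm : forall g, Q g -> Sm g.
Proof.
  cofix CIH. intros g HQ. destruct (Q_step g HQ) as [Hc [Hd' [Hx Hy]]].
  apply SmI; auto.
Qed.
End Glob.

Lemma r4_S n : r4 (S n) = 1 / 2^n.
Proof. unfold r4. simpl. field. apply Rgt_not_eq, pow2_pos. Qed.

Lemma arg_eq n x y : (Rnorm x y - r4 (S n)) / (r4 n - r4 (S n)) = 2^n * Rnorm x y - 1.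
Proof. rewrite r4_S. unfold r4. pose proof (pow2_pos n). field. lra. Qed.

Lemma cp_scal re c z : cp re (Cscal c z) = c * cp re z.
Proof. destruct re; reflexivity. Qed.
Lemma cp_add re a b : cp re (Cadd a b) = cp re a + cp re b.
Proof. destruct re; reflexivity. Qed.

Section U.
Variable d : nat -> R -> R.
Hypothesis Hd : forall n x, derivable_pt_lim (d n) x (d (S n) x).
Hypothesis Hz : forall x, 0 <= x <= 1/4 -> d 0%nat x = 0.
Hypothesis Ho : forall x, 3/4 <= x <= 1 -> d 0%nat x = 1.

Definition Ut (n : nat) (x y : R) : Cx * Cx := uA (dt d 0) r4 p4 F4 n x y.

Lemma tame_chi : Tame d (fun n x y => chi (dt d 0) r4 n x y).
Proof. apply (Te d _ _ (TS d 0)). intros. unfold chi. rewrite arg_eq. auto. Qed.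

Lemma tame_1mchi : Tame d (fun n x y => 1 - chi (dt d 0) r4 n x y).
Proof.
  apply (Te d (fun n x y => (fun _ _ _ => 1) n x y + (fun n x y => (fun _ _ _ => -1) n x y * chi (dt d 0) r4 n x y) n x y)).
  apply Tp. apply Tc, cbd_const. apply Tm. apply Tc, cbd_const. apply tame_chi.
  intros; ring.
Qed.

Lemma flat_a re : Flat d (fun n x y => cp re (Cscal (F4 n) (Cpow (x,y) (p4 n)))).
Proof.
  apply (Fe d _ _ (Fw d 1 0 (fun _ => 1) re (cbd_const 1) (fun n H => ltac:(lia)))).
  intros n x y Hn _. rewrite cp_scal. unfold p4.
  replace (n+1-1)%nat with n by lia. replace (n-0)%nat with n by lia. ring.
Qed.

Lemma flat_b re : Flat d (fun n x y => cp re (Cadd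
   (Cscal (chi (dt d 0) r4 n x y * F4 (n-1)) (Cpow (x,y) (p4 (n-1))))
   (Cscal ((1 - chi (dt d 0) r4 n x y) * F4 (S n)) (Cpow (x,y) (p4 (S n)))))).
Proof.
  eapply Fe. apply Fp.
  apply Fm. apply (Fw d 0 0 (fun _ => 1) re (cbd_const 1) (fun n H => ltac:(lia))). apply tame_chi.
  apply Fm. apply (Fw d 2 0 (fun _ => 1) re (cbd_const 1) (fun n H => ltac:(lia))). apply tame_1mchi.
  intros n x y Hn _. cbv beta. rewrite cp_add, !cp_scal. unfold p4.
  replace (n+0-1)%nat with (n-1)%nat by lia. replace (n+2-1)%nat with (S n) by lia.
  rewrite !Nat.sub_0_r. ring.
Qed.

Definition c11 (p : Cx * Cx) := fst (fst p).
Definition c12 (p : Cx * Cx) := snd (fst p).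
Definition c21 (p : Cx * Cx) := fst (snd p).
Definition c22 (p : Cx * Cx) := snd (snd p).

Lemma flat_c11 : Flat d (fun n x y => c11 (Ut n x y)).
Proof.
  eapply Fe. apply (Fpar d _ _ (flat_a true) (flat_b true)).
  intros. unfold c11, Ut, uA. cbv zeta. destruct (Nat.even n); reflexivity.
Qed.
Lemma flat_c12 : Flat d (fun n x y => c12 (Ut n x y)).
Proof.
  eapply Fe. apply (Fpar d _ _ (flat_a false) (flat_b false)).
  intros. unfold c12, Ut, uA. cbv zeta. destruct (Nat.even n); reflexivity.
Qed.
Lemma flat_c21 : Flat d (fun n x y => c21 (Ut n x y)).
Proof.
  eapply Fe. apply (Fpar d _ _ (flat_b true) (flat_a true)).
  intros. unfold c21, Ut, uA. cbv zeta. destruct (Nat.even n); reflexivity.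
Qed.
Lemma flat_c22 : Flat d (fun n x y => c22 (Ut n x y)).
Proof.
  eapply Fe. apply (Fpar d _ _ (flat_b false) (flat_a false)).
  intros. unfold c22, Ut, uA. cbv zeta. destruct (Nat.even n); reflexivity.
Qed.

Lemma Ut_switch m x y : chi (dt d 0) r4 m x y = 0 -> chi (dt d 0) r4 (S m) x y = 1 ->
  Ut (S m) x y = Ut m x y.
Proof.
  intros H1 H2. unfold Ut, uA. cbv zeta. rewrite H1, H2. rewrite Nat.even_succ, <- Nat.negb_even.
  replace (S m - 1)%nat with m by lia. unfold p4.
  destruct (Cpow (x,y) m) as [a1 a2]. destruct (Cpow (x,y) (S m)) as [b1 b2].
  destruct (Cpow (x,y) (m-1)) as [c1 c2]. destruct (Cpow (x,y) (S (S m))) as [e1 e2].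
  destruct (Nat.even m); simpl negb; unfold Cscal, Cadd; cbn [fst snd]; f_equal; f_equal; ring.
Qed.
End U.

Lemma div_lt_mul a P N : 0 < P -> a / P < N -> a < P * N.
Proof. intros HP H. apply (Rmult_lt_compat_l P) in H; auto. unfold Rdiv in H.
  replace (P * (a * / P)) with a in H by (field; lra). auto. Qed.
Lemma div_le_mul a P N : 0 < P -> a / P <= N -> a <= P * N.
Proof. intros HP H. apply (Rmult_le_compat_l P) in H; [|lra]. unfold Rdiv in H.
  replace (P * (a * / P)) with a in H by (field; lra). auto. Qed.
Lemma mul_lt_div a P N : 0 < P -> N < a / P -> P * N < a.
Proof. intros HP H. apply (Rmult_lt_compat_l P) in H; auto. unfold Rdiv in H.
  replace (P * (a * / P)) with a in H by (field; lra). auto. Qed.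
Lemma mul_le_div a P N : 0 < P -> N <= a / P -> P * N <= a.
Proof. intros HP H. apply (Rmult_le_compat_l P) in H; [|lra]. unfold Rdiv in H.
  replace (P * (a * / P)) with a in H by (field; lra). auto. Qed.

Lemma INR_lt_pow2 n : INR n + 1 <= 2 ^ n.
Proof. induction n. simpl; lra. rewrite S_INR. simpl. pose proof (pos_INR n). lra. Qed.

Lemma mul_div_lt a P N : 0 < P -> a < P * N -> a / P < N.
Proof. intros HP H. apply (Rmult_lt_reg_l P); auto. replace (P * (a / P)) with a by (field; lra). auto. Qed.
Lemma mul_div_lt' a P N : 0 < P -> P * N < a -> N < a / P.
Proof. intros HP H. apply (Rmult_lt_reg_l P); auto. replace (P * (a / P)) with a by (field; lra). auto. Qed.

Lemma find_n a : 0 < a <= 1 -> exists n, (1<=n)%nat /\ r4 (S n) < a <= r4 n.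
Proof.
  intros [Ha1 Ha2].
  destruct (archimed (2 / a)) as [HN _].
  set (N := Z.to_nat (up (2 / a))).
  assert (HN' : 2 / a <= INR N).
  { unfold N. rewrite INR_IZR_INZ, Z2Nat.id. lra. apply le_IZR.
    assert (0 < 2 / a) by (apply Rdiv_lt_0_compat; lra). lra. }
  assert (HrN : r4 N < a).
  { unfold r4. pose proof (INR_lt_pow2 N). pose proof (pow2_pos N).
    apply (Rmult_lt_reg_r (2^N)); auto. unfold Rdiv. rewrite Rmult_assoc, Rinv_l by lra.
    apply (Rmult_le_compat_l a) in HN'; [|lra]. unfold Rdiv in HN'.
    replace (a * (2 * / a)) with 2 in HN' by (field; lra). nra. }
  assert (Hgen : forall k, r4 (1 + k) < a -> exists n, (1<=n)%nat /\ r4 (S n) < a <= r4 n).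
  { induction k; intros Hk.
    - unfold r4 in Hk. simpl in Hk. lra.
    - destruct (Rle_lt_dec a (r4 (1+k))).
      + exists (1+k)%nat. split. lia. split; auto.
      + apply IHk; auto. }
  destruct N as [|N'].
  - unfold r4 in HrN. simpl in HrN. lra.
  - apply (Hgen N'). replace (1 + N')%nat with (S N') by lia. auto.
Qed.

Section R.
Variable d : nat -> R -> R.
Hypothesis Hd : forall n x, derivable_pt_lim (d n) x (d (S n) x).
Hypothesis Hz : forall x, 0 <= x <= 1/4 -> d 0%nat x = 0.
Hypothesis Ho : forall x, 3/4 <= x <= 1 -> d 0%nat x = 1.

Lemma chi_eq n a b : r4 (S n) <= Rnorm a b <= r4 n -> chi (d 0%nat) r4 n a b = chi (dt d 0) r4 n a b.
Proof.
  intros [H1 H2]. unfold chi. rewrite arg_eq. rewrite (dt_s d Hz Ho); auto.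
  rewrite r4_S in H1. unfold r4 in H2. pose proof (pow2_pos n).
  apply div_le_mul in H1; auto. apply mul_le_div in H2; auto. lra.
Qed.

Lemma GC_Ut u n a b : GC_map (d 0%nat) r4 p4 F4 u -> (1<=n)%nat -> r4 (S n) <= Rnorm a b <= r4 n ->
  u a b = Ut d n a b.
Proof.
  intros [_ HG] Hn Hab. rewrite (HG n a b Hn Hab). unfold Ut, uA. cbv zeta. rewrite chi_eq; auto.
Qed.

Lemma u_rep u : GC_map (d 0%nat) r4 p4 F4 u -> forall x y, D1 x y -> 0 < Rnorm x y ->
  exists n e, (1<=n)%nat /\ 0 < e /\ forall a b, Rnorm (a-x) (b-y) < e -> inE n a b /\ u a b = Ut d n a b.
Proof.
  intros HG x y HD Hp. unfold D1 in HD.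
  destruct (find_n (Rnorm x y)) as [n [Hn [H1 H2]]]. lra.
  destruct H2 as [H2|H2].
  - exists n, (Rmin (Rnorm x y - r4 (S n)) (r4 n - Rnorm x y)). split; auto. split.
    apply Rmin_pos; lra. intros a b Hab.
    pose proof (Rmin_l (Rnorm x y - r4 (S n)) (r4 n - Rnorm x y)).
    pose proof (Rmin_r (Rnorm x y - r4 (S n)) (r4 n - Rnorm x y)).
    pose proof (Rnorm_diff x y a b).
    assert (Rabs (Rnorm a b - Rnorm x y) < Rmin (Rnorm x y - r4 (S n)) (r4 n - Rnorm x y)) by lra.
    apply Rabs_def2 in H4. split.
    + rewrite r4_S in *. unfold r4 in *. unfold inE. pose proof (pow2_pos n).
      split. apply (Rlt_trans _ (1/2^n)). unfold Rdiv; apply Rmult_lt_compat_r.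
      apply Rinv_0_lt_compat; auto. lra. lra.
      apply (Rlt_trans _ (2/2^n)). lra. unfold Rdiv; apply Rmult_lt_compat_r.
      apply Rinv_0_lt_compat; auto. lra.
    + apply GC_Ut; auto. lra.
  - destruct n as [|[|m]]; [lia| |].
    { unfold r4 in H2. simpl in H2. lra. }
    set (m1 := S m). assert (Hm1 : (1 <= m1)%nat) by (unfold m1; lia).
    fold m1 in H1, H2. rewrite r4_S in H2.
    pose proof (pow2_pos m1).
    exists m1, (1 / (8 * 2^m1)). split; auto. split.
    { apply Rdiv_lt_0_compat; lra. }
    intros a b Hab. pose proof (Rnorm_diff x y a b).
    assert (Hr : Rabs (Rnorm a b - Rnorm x y) < 1 / (8 * 2^m1)) by lra.
    apply Rabs_def2 in Hr. rewrite H2 in Hr.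
    assert (Hlo : 7/8 < 2^m1 * Rnorm a b).
    { apply div_lt_mul; auto. replace (7/8/2^m1) with (1/2^m1 - 1/(8*2^m1)) by (field; lra). lra. }
    assert (Hhi : 2^m1 * Rnorm a b < 9/8).
    { apply mul_lt_div; auto. replace (9/8/2^m1) with (1/2^m1 + 1/(8*2^m1)) by (field; lra). lra. }
    split.
    { unfold inE. split. apply mul_div_lt; auto; lra. apply mul_div_lt'; auto; lra. }
    destruct (Rle_lt_dec 1 (2^m1 * Rnorm a b)) as [Hc|Hc].
    + apply GC_Ut; auto. rewrite r4_S. unfold r4. split.
      apply (Rmult_le_reg_l (2^m1)); auto. unfold Rdiv. replace (2 ^ m1 * (1 * / 2 ^ m1)) with 1 by (field; lra). lra.
      apply (Rmult_le_reg_l (2^m1)); auto. unfold Rdiv. replace (2 ^ m1 * (2 * / 2 ^ m1)) with 2 by (field; lra). lra.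
    + rewrite (GC_Ut u (S m1)); auto.
      * apply Ut_switch.
        -- unfold chi. rewrite arg_eq. apply dt_lo. lra.
        -- unfold chi. rewrite arg_eq. apply dt0_hi.
           replace (2 ^ S m1 * Rnorm a b - 1) with (2*(2^m1*Rnorm a b) - 1) by (simpl; ring). lra.
      * rewrite r4_S, r4_S. replace (2 ^ S m1) with (2 * 2^m1) by (simpl; ring). split.
        apply (Rmult_le_reg_l (2^m1)); auto. replace (2 ^ m1 * (1 / (2 * 2 ^ m1))) with (1/2) by (field; lra). lra.
        apply (Rmult_le_reg_l (2^m1)); auto. replace (2 ^ m1 * (1 / 2 ^ m1)) with 1 by (field; lra). lra.
Qed.
End R.

Lemma C2norm_le (a b : Cx) : C2norm a b <= Rabs (fst a) + Rabs (snd a) + Rabs (fst b) + Rabs (snd b).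
Proof.
  unfold C2norm, Cnorm2.
  pose proof (Rabs_pos (fst a)). pose proof (Rabs_pos (snd a)). pose proof (Rabs_pos (fst b)). pose proof (Rabs_pos (snd b)).
  rewrite <- (sqrt_pow2 (Rabs (fst a) + Rabs (snd a) + Rabs (fst b) + Rabs (snd b))) by lra.
  apply sqrt_le_1_alt. rewrite <- (pow2_abs (fst a)), <- (pow2_abs (snd a)), <- (pow2_abs (fst b)), <- (pow2_abs (snd b)).
  nra.
Qed.

Section Main.
Variable d : nat -> R -> R.
Hypothesis Hd : forall n x, derivable_pt_lim (d n) x (d (S n) x).
Hypothesis Hz : forall x, 0 <= x <= 1/4 -> d 0%nat x = 0.
Hypothesis Ho : forall x, 3/4 <= x <= 1 -> d 0%nat x = 1.
Variable u : R -> R -> Cx * Cx.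
Hypothesis HG : GC_map (d 0%nat) r4 p4 F4 u.

Lemma rep_comp (f : Cx * Cx -> R) : Rep (fun x y => f (u x y)) (fun n x y => f (Ut d n x y)).
Proof.
  intros x y HD Hp. destruct (u_rep d Hz Ho u HG x y HD Hp) as [n [e [Hn [He Hb]]]].
  exists n, e. split; auto. split; auto. intros a b Hab. destruct (Hb a b Hab) as [H1 H2].
  split; auto. rewrite H2; auto.
Qed.

Lemma Q_comp (f : Cx * Cx -> R) : f (C0, C0) = 0 -> Flat d (fun n x y => f (Ut d n x y)) ->
  Q d (fun x y => f (u x y)).
Proof.
  intros H0 HF. exists (fun n x y => f (Ut d n x y)). split; auto. split.
  destruct HG as [E _]. rewrite E. auto. apply rep_comp.
Qed.

Lemma Q11 : Q d (fun x y => c11 (u x y)).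
Proof. apply Q_comp. reflexivity. apply flat_c11. Qed.
Lemma Q12 : Q d (fun x y => c12 (u x y)).
Proof. apply Q_comp. reflexivity. apply flat_c12. Qed.
Lemma Q21 : Q d (fun x y => c21 (u x y)).
Proof. apply Q_comp. reflexivity. apply flat_c21. Qed.
Lemma Q22 : Q d (fun x y => c22 (u x y)).
Proof. apply Q_comp. reflexivity. apply flat_c22. Qed.

Lemma part1 : smooth_map D1 u.
Proof.
  split; [|split; [|split]]; apply Sm_smooth; apply (Q_Sm d Hd Hz Ho).
  apply Q11. apply Q12. apply Q21. apply Q22.
Qed.

Lemma small_comp (f : Cx * Cx -> R) : Q d (fun x y => f (u x y)) -> forall k eps, 0 < eps -> exists del, 0 < del /\
  forall x y, D1 x y -> 0 < Rnorm x y < del -> Rabs (f (u x y)) <= eps * Rnorm x y ^ k.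
Proof.
  intros [G [HF [_ HR]]]. destruct (flat_prop d Hd Hz Ho G HF) as [HB _].
  apply (small _ G HB HR).
Qed.

Lemma part2 : vanishes_inf_order u.
Proof.
  intros k eps He.
  destruct (small_comp c11 Q11 k (eps/8) ltac:(lra)) as [d1 [Hd1 S1]].
  destruct (small_comp c12 Q12 k (eps/8) ltac:(lra)) as [d2 [Hd2 S2]].
  destruct (small_comp c21 Q21 k (eps/8) ltac:(lra)) as [d3 [Hd3 S3]].
  destruct (small_comp c22 Q22 k (eps/8) ltac:(lra)) as [d4 [Hd4 S4]].
  exists (Rmin (Rmin d1 d2) (Rmin d3 d4)). split.
  repeat apply Rmin_pos; auto.
  intros x y HD [Hp Hl].
  pose proof (Rmin_l (Rmin d1 d2) (Rmin d3 d4)). pose proof (Rmin_r (Rmin d1 d2) (Rmin d3 d4)).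
  pose proof (Rmin_l d1 d2). pose proof (Rmin_r d1 d2). pose proof (Rmin_l d3 d4). pose proof (Rmin_r d3 d4).
  assert (A1 : 0 < Rnorm x y < d1) by lra. assert (A2 : 0 < Rnorm x y < d2) by lra.
  assert (A3 : 0 < Rnorm x y < d3) by lra. assert (A4 : 0 < Rnorm x y < d4) by lra.
  specialize (S1 x y HD A1). specialize (S2 x y HD A2).
  specialize (S3 x y HD A3). specialize (S4 x y HD A4).
  unfold c11, c12, c21, c22 in *.
  pose proof (C2norm_le (fst (u x y)) (snd (u x y))).
  assert (Hk : 0 < Rnorm x y ^ k) by (apply pow_lt; auto).
  apply (Rmult_lt_reg_r (Rnorm x y ^ k)); auto. unfold Rdiv. rewrite Rmult_assoc, Rinv_l by lra.
  nra.
Qed.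
End Main.

Section D.
Variable d : nat -> R -> R.
Hypothesis Hd : forall n x, derivable_pt_lim (d n) x (d (S n) x).
Hypothesis Hz : forall x, 0 <= x <= 1/4 -> d 0%nat x = 0.
Hypothesis Ho : forall x, 3/4 <= x <= 1 -> d 0%nat x = 1.
Variables (n : nat) (x y : R).
Hypothesis Hp : 0 < Rnorm x y.

Definition cpx (re : bool) (q : nat) : R := INR q * cp re (Cpow (x,y) (q-1)).
Definition cpy (re : bool) (q : nat) : R := if re then - (INR q * snd (Cpow (x,y) (q-1))) else INR q * fst (Cpow (x,y) (q-1)).

Lemma cp_dx re q : derivable_pt_lim (fun t => cp re (Cpow (t,y) q)) x (cpx re q).
Proof. destruct (Cpow_dx x y q). unfold cpx; destruct re; auto. Qed.
Lemma cp_dy re q : derivable_pt_lim (fun t => cp re (Cpow (x,t) q)) y (cpy re q).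
Proof. destruct (Cpow_dy x y q). unfold cpy; destruct re; auto. Qed.

Definition chv := dt d 0 (2^n * Rnorm x y - 1).
Definition gv := dt d 1 (2^n * Rnorm x y - 1).
Definition gx := gv * (2^n * (x / Rnorm x y)).
Definition gy := gv * (2^n * (y / Rnorm x y)).

Lemma chi_dx : derivable_pt_lim (fun t => chi (dt d 0) r4 n t y) x gx.
Proof.
  apply (derivable_pt_lim_ext (fun t => dt d 0 (2^n * Rnorm t y - 1))).
  intro; unfold chi; rewrite arg_eq; auto.
  unfold gx, gv. eapply dpl_val. apply (derivable_pt_lim_comp (fun t => 2^n * Rnorm t y - 1) (dt d 0)).
  apply (derivable_pt_lim_minus (fun t => 2^n * Rnorm t y) (fun _ => 1)).
  apply (derivable_pt_lim_scal (fun t => Rnorm t y)). apply Rnorm_dx; auto.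
  apply (dpl_cst _ _ 1); auto. apply dt_deriv; auto. unfold Rdiv. ring.
Qed.
Lemma chi_dy : derivable_pt_lim (fun t => chi (dt d 0) r4 n x t) y gy.
Proof.
  apply (derivable_pt_lim_ext (fun t => dt d 0 (2^n * Rnorm x t - 1))).
  intro; unfold chi; rewrite arg_eq; auto.
  unfold gy, gv. eapply dpl_val. apply (derivable_pt_lim_comp (fun t => 2^n * Rnorm x t - 1) (dt d 0)).
  apply (derivable_pt_lim_minus (fun t => 2^n * Rnorm x t) (fun _ => 1)).
  apply (derivable_pt_lim_scal (fun t => Rnorm x t)). apply Rnorm_dy; auto.
  apply (dpl_cst _ _ 1); auto. apply dt_deriv; auto. unfold Rdiv. ring.
Qed.

Lemma chv_eq : chi (dt d 0) r4 n x y = chv.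
Proof. unfold chi, chv. rewrite arg_eq; auto. Qed.

Definition Pf (a b : R) : Cx := Cscal (F4 n) (Cpow (a,b) (p4 n)).
Definition Mf (a b : R) : Cx := Cadd
   (Cscal (chi (dt d 0) r4 n a b * F4 (n-1)) (Cpow (a,b) (p4 (n-1))))
   (Cscal ((1 - chi (dt d 0) r4 n a b) * F4 (S n)) (Cpow (a,b) (p4 (S n)))).

Lemma P_dx re : derivable_pt_lim (fun t => cp re (Pf t y)) x (F4 n * cpx re n).
Proof.
  apply (derivable_pt_lim_ext (fun t => F4 n * cp re (Cpow (t,y) n))).
  intro; unfold Pf; rewrite cp_scal; auto.
  apply (derivable_pt_lim_scal (fun t => cp re (Cpow (t,y) n))). apply cp_dx.
Qed.
Lemma P_dy re : derivable_pt_lim (fun t => cp re (Pf x t)) y (F4 n * cpy re n).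
Proof.
  apply (derivable_pt_lim_ext (fun t => F4 n * cp re (Cpow (x,t) n))).
  intro; unfold Pf; rewrite cp_scal; auto.
  apply (derivable_pt_lim_scal (fun t => cp re (Cpow (x,t) n))). apply cp_dy.
Qed.

Definition MX (re : bool) : R := gx * F4 (n-1) * cp re (Cpow (x,y) (n-1)) + chv * F4 (n-1) * cpx re (n-1)
   + (- gx) * F4 (S n) * cp re (Cpow (x,y) (S n)) + (1 - chv) * F4 (S n) * cpx re (S n).
Definition MY (re : bool) : R := gy * F4 (n-1) * cp re (Cpow (x,y) (n-1)) + chv * F4 (n-1) * cpy re (n-1)
   + (- gy) * F4 (S n) * cp re (Cpow (x,y) (S n)) + (1 - chv) * F4 (S n) * cpy re (S n).

Lemma M_dx re : derivable_pt_lim (fun t => cp re (Mf t y)) x (MX re).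
Proof.
  apply (derivable_pt_lim_ext (fun t => chi (dt d 0) r4 n t y * F4 (n-1) * cp re (Cpow (t,y) (n-1)) +
                  (1 - chi (dt d 0) r4 n t y) * F4 (S n) * cp re (Cpow (t,y) (S n)))).
  intro; unfold Mf; rewrite cp_add, !cp_scal; auto.
  unfold MX. rewrite <- chv_eq.
  eapply dpl_val. apply (derivable_pt_lim_plus (fun t => chi (dt d 0) r4 n t y * F4 (n-1) * cp re (Cpow (t,y) (n-1)))
     (fun t => (1 - chi (dt d 0) r4 n t y) * F4 (S n) * cp re (Cpow (t,y) (S n)))).
  - apply (derivable_pt_lim_mult (fun t => chi (dt d 0) r4 n t y * F4 (n-1)) (fun t => cp re (Cpow (t,y) (n-1)))).
    apply (derivable_pt_lim_mult (fun t => chi (dt d 0) r4 n t y) (fun _ => F4 (n-1))).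
    apply chi_dx. apply (dpl_cst _ _ (F4 (n-1))); auto. apply cp_dx.
  - apply (derivable_pt_lim_mult (fun t => (1 - chi (dt d 0) r4 n t y) * F4 (S n)) (fun t => cp re (Cpow (t,y) (S n)))).
    apply (derivable_pt_lim_mult (fun t => 1 - chi (dt d 0) r4 n t y) (fun _ => F4 (S n))).
    apply (derivable_pt_lim_minus (fun _ => 1) (fun t => chi (dt d 0) r4 n t y)).
    apply (dpl_cst _ _ 1); auto. apply chi_dx. apply (dpl_cst _ _ (F4 (S n))); auto. apply cp_dx.
  - ring.
Qed.

Lemma M_dy re : derivable_pt_lim (fun t => cp re (Mf x t)) y (MY re).
Proof.
  apply (derivable_pt_lim_ext (fun t => chi (dt d 0) r4 n x t * F4 (n-1) * cp re (Cpow (x,t) (n-1)) +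
                  (1 - chi (dt d 0) r4 n x t) * F4 (S n) * cp re (Cpow (x,t) (S n)))).
  intro; unfold Mf; rewrite cp_add, !cp_scal; auto.
  unfold MY. rewrite <- chv_eq.
  eapply dpl_val. apply (derivable_pt_lim_plus (fun t => chi (dt d 0) r4 n x t * F4 (n-1) * cp re (Cpow (x,t) (n-1)))
     (fun t => (1 - chi (dt d 0) r4 n x t) * F4 (S n) * cp re (Cpow (x,t) (S n)))).
  - apply (derivable_pt_lim_mult (fun t => chi (dt d 0) r4 n x t * F4 (n-1)) (fun t => cp re (Cpow (x,t) (n-1)))).
    apply (derivable_pt_lim_mult (fun t => chi (dt d 0) r4 n x t) (fun _ => F4 (n-1))).
    apply chi_dy. apply (dpl_cst _ _ (F4 (n-1))); auto. apply cp_dy.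
  - apply (derivable_pt_lim_mult (fun t => (1 - chi (dt d 0) r4 n x t) * F4 (S n)) (fun t => cp re (Cpow (x,t) (S n)))).
    apply (derivable_pt_lim_mult (fun t => 1 - chi (dt d 0) r4 n x t) (fun _ => F4 (S n))).
    apply (derivable_pt_lim_minus (fun _ => 1) (fun t => chi (dt d 0) r4 n x t)).
    apply (dpl_cst _ _ 1); auto. apply chi_dy. apply (dpl_cst _ _ (F4 (S n))); auto. apply cp_dy.
  - ring.
Qed.
End D.

Lemma Cnorm2_scal c a : Cnorm2 (Cscal c a) = c^2 * Cnorm2 a.
Proof. destruct a; unfold Cnorm2, Cscal; cbn [fst snd]; ring. Qed.

Lemma Cnorm2_nonneg a : 0 <= Cnorm2 a.
Proof. destruct a; unfold Cnorm2; cbn [fst snd]; nra. Qed.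

Lemma sqrt_Cnorm2_scal c a : sqrt (Cnorm2 (Cscal c a)) = Rabs c * sqrt (Cnorm2 a).
Proof. rewrite Cnorm2_scal, sqrt_mult_alt. rewrite <- sqrt_Rsqr_abs. unfold Rsqr.
  replace (c^2) with (c*c) by ring. auto. apply pow2_ge_0. Qed.

Lemma sqrt_Cnorm2_mul a b : sqrt (Cnorm2 (Cmul a b)) = sqrt (Cnorm2 a) * sqrt (Cnorm2 b).
Proof. rewrite Cnorm2_mul, sqrt_mult_alt; auto. apply Cnorm2_nonneg. Qed.

Lemma sqrt_Cnorm2_add a b : sqrt (Cnorm2 (Cadd a b)) <= sqrt (Cnorm2 a) + sqrt (Cnorm2 b).
Proof. destruct a as [p q], b as [r t]. unfold Cnorm2, Cadd; cbn [fst snd].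
  apply (Rnorm_triangle p q r t). Qed.

Lemma Rpower_half_le : Rpower 2 (1/2) <= 2.
Proof. assert (Rpower 2 1 = 2) by (apply Rpower_1; lra).
  eapply Rle_trans; [apply (Rle_Rpower 2 (1/2) 1); lra | lra]. Qed.

Lemma F_prev n : (1 <= n)%nat -> 2^n * F4 (n-1) = F4 n * Rpower 2 (1/2).
Proof.
  intro Hn. unfold F4. rewrite pow2_Rpower, <- !Rpower_plus. f_equal.
  rewrite minus_INR by lia. simpl. field.
Qed.

Lemma F_next n : F4 (S n) / 2^n = F4 n * Rpower 2 (1/2).
Proof.
  unfold F4. rewrite pow2_Rpower. unfold Rdiv. rewrite <- Rpower_Ropp, <- !Rpower_plus. f_equal.
  rewrite S_INR. field.
Qed.

Section Pt.
Variable d : nat -> R -> R.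
Variables (n : nat) (x y : R).
Hypothesis Hn : (1 <= n)%nat.
Hypothesis HE : inE n x y.

Definition aPx : Cx := (F4 n * cpx x y true n, F4 n * cpx x y false n).
Definition aPy : Cx := (F4 n * cpy x y true n, F4 n * cpy x y false n).
Definition aMx : Cx := (MX d n x y true, MX d n x y false).
Definition aMy : Cx := (MY d n x y true, MY d n x y false).

Lemma WzP : Wz aPx aPy = Cscal (F4 n * INR n) (Cpow (x,y) (n-1)).
Proof.
  unfold aPx, aPy, cpx, cpy, cp. destruct (Cpow (x,y) (n-1)) as [a1 a2].
  unfold Wz, Cscal, Cadd, Cmul, Ci; cbn [fst snd]. f_equal; field.
Qed.

Lemma WzbarP : Wzbar aPx aPy = C0.
Proof.
  unfold aPx, aPy, cpx, cpy, cp. destruct (Cpow (x,y) (n-1)) as [a1 a2].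
  unfold Wzbar, Cscal, Cadd, Cmul, Ci, C0; cbn [fst snd]. f_equal; field.
Qed.

Lemma WzbarM : Wzbar aMx aMy = Cscal (1/2) (Cmul (gx d n x y, gy d n x y)
   (Cadd (Cscal (F4 (n-1)) (Cpow (x,y) (n-1))) (Cscal (- F4 (S n)) (Cpow (x,y) (S n))))).
Proof.
  unfold aMx, aMy, MX, MY, cpx, cpy, cp.
  destruct (Cpow (x,y) (n-1)) as [a1 a2]. destruct (Cpow (x,y) (S n)) as [b1 b2].
  destruct (Cpow (x,y) (n-1-1)) as [c1 c2]. destruct (Cpow (x,y) (S n - 1)) as [e1 e2].
  unfold Wzbar, Cscal, Cadd, Cmul, Ci; cbn [fst snd]. f_equal; ring.
Qed.

Lemma Ng_eq : sqrt (Cnorm2 (gx d n x y, gy d n x y)) = Rabs (gv d n x y) * 2^n.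
Proof.
  pose proof (inE_pos n x y HE) as Hp. unfold Cnorm2, gx, gy; cbn [fst snd].
  replace ((gv d n x y * (2 ^ n * (x / Rnorm x y))) ^ 2 + (gv d n x y * (2 ^ n * (y / Rnorm x y))) ^ 2)
    with ((gv d n x y * 2^n)^2 * ((x^2 + y^2) / (Rnorm x y * Rnorm x y))) by (field; lra).
  rewrite Rnorm_sq. replace ((x^2+y^2)/(x^2+y^2)) with 1 by (field; pose proof (Rnorm_pos_sq x y Hp); lra).
  rewrite Rmult_1_r. replace ((gv d n x y * 2 ^ n) ^ 2) with (Rsqr (gv d n x y * 2 ^ n)) by (unfold Rsqr; ring).
  rewrite sqrt_Rsqr_abs, Rabs_mult, (Rabs_right (2^n)); auto. left; apply pow2_pos.
Qed.
End Pt.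

Lemma C2norm_comm a b : C2norm a b = C2norm b a.
Proof. unfold C2norm. f_equal. ring. Qed.

Lemma log_bound n N : 3/4/2^n < N -> N < 1 ->
  0 < - (ln N / ln 2) < INR n + 1.
Proof.
  intros H1 H2. pose proof (pow2_pos n). pose proof ln_lt_2.
  assert (HN : 0 < N). { assert (0 < 3/4/2^n) by (apply Rdiv_lt_0_compat; lra). lra. }
  assert (Hl0 : ln N < 0) by (rewrite <- ln_1; apply ln_increasing; auto).
  assert (Hl1 : ln (/ 2^(S n)) < ln N).
  { apply ln_increasing. apply Rinv_0_lt_compat, pow2_pos.
    simpl. rewrite Rinv_mult. apply (Rlt_trans _ (3/4/2^n)); auto. unfold Rdiv.
    apply Rmult_lt_compat_r. apply Rinv_0_lt_compat; auto. lra. }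
  rewrite ln_Rinv, ln_pow, S_INR in Hl1 by (try apply pow2_pos; lra).
  split.
  - unfold Rdiv. assert (0 < / ln 2) by (apply Rinv_0_lt_compat; lra). nra.
  - apply (Rmult_lt_reg_r (ln 2)). lra. unfold Rdiv.
    replace (- (ln N * / ln 2) * ln 2) with (- ln N) by (field; lra). lra.
Qed.

Section Pt2.
Variable d : nat -> R -> R.
Variables (n : nat) (x y : R).
Hypothesis Hn : (1 <= n)%nat.
Hypothesis HE : inE n x y.
Hypothesis HD : Rnorm x y < 1.
Variable M1 : R.
Hypothesis HM1 : 0 <= M1.
Hypothesis Hg : Rabs (gv d n x y) <= M1.

Lemma ratio_core aMz : 
  C2norm (Wzbar (aPx n x y) (aPy n x y)) (Wzbar (aMx d n x y) (aMy d n x y)) / C2norm (Wz (aPx n x y) (aPy n x y)) aMz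
  <= (16 * M1 + 1) / (- (ln (Rnorm x y) / ln 2)).
Proof.
  pose proof (inE_pos n x y HE) as Hp.
  set (N := Rnorm x y) in *.
  assert (HF0 : 0 < F4 (n-1)) by (unfold F4; apply exp_pos).
  assert (HF1 : 0 < F4 n) by (unfold F4; apply exp_pos).
  assert (HF2 : 0 < F4 (S n)) by (unfold F4; apply exp_pos).
  assert (HP2 : 0 < 2^n) by apply pow2_pos.
  assert (HNn : 0 < N^(n-1)) by (apply pow_lt; auto).
  assert (Hnr : 1 <= INR n) by (apply (le_INR 1); lia).
  set (A := 1/2 * M1 * 2^n * (F4 (n-1) * N^(n-1) + F4 (S n) * N^(S n))).
  set (B := F4 n * INR n * N^(n-1)).
  assert (HB : 0 < B) by (unfold B; apply Rmult_lt_0_compat; [nra|auto]).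
  assert (Hnum : C2norm (Wzbar (aPx n x y) (aPy n x y)) (Wzbar (aMx d n x y) (aMy d n x y)) <= A).
  { unfold C2norm. rewrite WzbarP. replace (Cnorm2 C0) with 0 by (unfold Cnorm2, C0; simpl; ring).
    rewrite Rplus_0_l, WzbarM, sqrt_Cnorm2_scal, sqrt_Cnorm2_mul, Ng_eq by auto.
    pose proof (sqrt_Cnorm2_add (Cscal (F4 (n-1)) (Cpow (x,y) (n-1))) (Cscal (- F4 (S n)) (Cpow (x,y) (S n)))) as Hadd.
    rewrite !sqrt_Cnorm2_scal, !sqrt_Cnorm2_pow, Rabs_Ropp, !Rabs_right in Hadd by lra.
    fold N in Hadd. rewrite (Rabs_right (1/2)) by lra.
    pose proof (Rabs_pos (gv d n x y)).
    assert (Rabs (gv d n x y) * 2^n * sqrt (Cnorm2 (Cadd (Cscal (F4 (n - 1)) (Cpow (x, y) (n - 1)))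
          (Cscal (- F4 (S n)) (Cpow (x, y) (S n))))) <= M1 * 2^n * (F4 (n - 1) * N ^ (n - 1) + F4 (S n) * N ^ S n)).
    { apply Rmult_le_compat. apply Rmult_le_pos; lra. apply sqrt_pos.
      apply Rmult_le_compat_r; lra. auto. }
    unfold A. lra. }
  assert (Hden : B <= C2norm (Wz (aPx n x y) (aPy n x y)) aMz).
  { unfold C2norm. rewrite WzP. unfold B.
    replace (F4 n * INR n * N^(n-1)) with (sqrt (Cnorm2 (Cscal (F4 n * INR n) (Cpow (x,y) (n-1))))).
    apply sqrt_le_1_alt. pose proof (Cnorm2_nonneg aMz). lra.
    rewrite sqrt_Cnorm2_scal, sqrt_Cnorm2_pow, Rabs_right; auto. nra. }
  assert (Hrat : C2norm (Wzbar (aPx n x y) (aPy n x y)) (Wzbar (aMx d n x y) (aMy d n x y)) /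
                 C2norm (Wz (aPx n x y) (aPy n x y)) aMz <= A / B).
  { unfold Rdiv. apply Rmult_le_compat.
    unfold C2norm; apply sqrt_pos. left; apply Rinv_0_lt_compat; lra. auto.
    apply Rinv_le_contravar; auto. }
  eapply Rle_trans. exact Hrat.
  assert (HR := Rpower_half_le).
  assert (HR0 : 0 < Rpower 2 (1/2)) by (unfold Rpower; apply exp_pos).
  assert (E0 := F_prev n Hn). assert (E2 := F_next n).
  assert (HNs : N^(S n) = N^(n-1) * N^2). { rewrite <- pow_add. f_equal. lia. }
  assert (HN2 : 2^n * N^2 <= 25/4 / 2^n).
  { destruct HE as [_ H2]. fold N in H2. assert (0 <= N) by lra.
    assert (N^2 <= (5/2/2^n)^2) by (apply pow_incr; lra).
    replace (25/4/2^n) with (2^n * (5/2/2^n)^2) by (field; lra).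
    apply Rmult_le_compat_l; lra. }
  assert (HF2b : 2^n * F4 (S n) * N^2 <= 25/4 * (F4 n * Rpower 2 (1/2))).
  { rewrite <- E2. replace (2^n * F4 (S n) * N^2) with (F4 (S n) * (2^n * N^2)) by ring.
    replace (25/4 * (F4 (S n) / 2^n)) with (F4 (S n) * (25/4/2^n)) by (field; lra).
    apply Rmult_le_compat_l; lra. }
  assert (HA : A <= 29/4 * M1 * F4 n * N^(n-1)).
  { unfold A. rewrite HNs.
    replace (1 / 2 * M1 * 2 ^ n * (F4 (n - 1) * N ^ (n - 1) + F4 (S n) * (N ^ (n - 1) * N ^ 2))) with
      (1/2 * M1 * N^(n-1) * (2^n * F4 (n-1) + 2^n * F4 (S n) * N^2)) by ring.
    rewrite E0.
    replace (29 / 4 * M1 * F4 n * N ^ (n - 1)) with (1/2 * M1 * N^(n-1) * (29/2 * F4 n)) by field.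
    apply Rmult_le_compat_l. apply Rmult_le_pos; [lra|lra].
    nra. }
  assert (HAB : A / B <= 29/4 * M1 / INR n).
  { replace (29/4 * M1 / INR n) with ((29/4*M1*F4 n*N^(n-1)) * / B) by (unfold B; field; lra).
    unfold Rdiv. apply Rmult_le_compat_r; [left; apply Rinv_0_lt_compat; auto | auto]. }
  eapply Rle_trans. exact HAB.
  destruct (log_bound n N) as [HL1 HL2]; auto. destruct HE; auto.
  set (L := - (ln N / ln 2)) in *.
  assert (L <= 2 * INR n) by lra.
  apply (Rmult_le_reg_r (INR n * L)). nra.
  replace (29 / 4 * M1 / INR n * (INR n * L)) with (29/4 * M1 * L) by (field; lra).
  replace ((16 * M1 + 1) / L * (INR n * L)) with ((16 * M1 + 1) * INR n) by (field; lra).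
  nra.
Qed.
End Pt2.

Lemma Ut_PM d n a b : Ut d n a b = if Nat.even n then (Pf n a b, Mf d n a b) else (Mf d n a b, Pf n a b).
Proof. unfold Ut, uA, Pf, Mf. cbv zeta. reflexivity. Qed.

Lemma Rnorm_0y t : Rnorm 0 t = Rabs t.
Proof. unfold Rnorm. replace (0^2 + t^2) with (t^2+0^2) by ring. fold (Rnorm t 0). apply Rnorm_x0. Qed.

Lemma pair_eq (a : Cx) p q : fst a = p -> snd a = q -> a = (p, q).
Proof. destruct a; simpl; intros; subst; auto. Qed.

Section Fin.
Variable d : nat -> R -> R.
Hypothesis Hd : forall n x, derivable_pt_lim (d n) x (d (S n) x).
Hypothesis Hz : forall x, 0 <= x <= 1/4 -> d 0%nat x = 0.
Hypothesis Ho : forall x, 3/4 <= x <= 1 -> d 0%nat x = 1.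

Lemma get_derivs u x y n e a1x a1y a2x a2y : (1 <= n)%nat -> 0 < e ->
  (forall a b, Rnorm (a-x) (b-y) < e -> inE n a b /\ u a b = Ut d n a b) ->
  has_dx (u1 u) x y a1x -> has_dy (u1 u) x y a1y ->
  has_dx (u2 u) x y a2x -> has_dy (u2 u) x y a2y ->
  if Nat.even n then a1x = aPx n x y /\ a1y = aPy n x y /\ a2x = aMx d n x y /\ a2y = aMy d n x y
  else a1x = aMx d n x y /\ a1y = aMy d n x y /\ a2x = aPx n x y /\ a2y = aPy n x y.
Proof.
  intros Hn He Hb [D1x D2x] [D1y D2y] [D3x D4x] [D3y D4y].
  assert (HE : inE n x y) by (apply Hb; rewrite !Rminus_diag, Rnorm_00; auto).
  pose proof (inE_pos n x y HE) as Hp.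
  assert (Lx : forall t, Rabs (t - x) < e -> u t y = Ut d n t y).
  { intros t Ht. apply Hb. rewrite Rminus_diag, Rnorm_x0; auto. }
  assert (Ly : forall t, Rabs (t - y) < e -> u x t = Ut d n x t).
  { intros t Ht. apply Hb. rewrite Rminus_diag, Rnorm_0y; auto. }
  unfold u1, u2 in *.
  assert (MX' := fun re => M_dx d Hd Hz Ho n x y Hp re).
  assert (MY' := fun re => M_dy d Hd Hz Ho n x y Hp re).
  destruct (Nat.even n) eqn:Ev;
  (split; [|split; [|split]]; apply pair_eq; unfold aPx, aPy, aMx, aMy; cbn [fst snd]).
  - eapply (dpl_unique_local (fun t => fst (fst (u t y))) (fun t => cp true (Pf n t y)) x _ _ e He); [|exact D1x|apply P_dx].
    intros t Ht; rewrite (Lx t Ht), Ut_PM, Ev; reflexivity.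
  - eapply (dpl_unique_local (fun t => snd (fst (u t y))) (fun t => cp false (Pf n t y)) x _ _ e He); [|exact D2x|apply P_dx].
    intros t Ht; rewrite (Lx t Ht), Ut_PM, Ev; reflexivity.
  - eapply (dpl_unique_local (fun t => fst (fst (u x t))) (fun t => cp true (Pf n x t)) y _ _ e He); [|exact D1y|apply P_dy].
    intros t Ht; rewrite (Ly t Ht), Ut_PM, Ev; reflexivity.
  - eapply (dpl_unique_local (fun t => snd (fst (u x t))) (fun t => cp false (Pf n x t)) y _ _ e He); [|exact D2y|apply P_dy].
    intros t Ht; rewrite (Ly t Ht), Ut_PM, Ev; reflexivity.
  - eapply (dpl_unique_local (fun t => fst (snd (u t y))) (fun t => cp true (Mf d n t y)) x _ _ e He); [|exact D3x|apply MX'].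
    intros t Ht; rewrite (Lx t Ht), Ut_PM, Ev; reflexivity.
  - eapply (dpl_unique_local (fun t => snd (snd (u t y))) (fun t => cp false (Mf d n t y)) x _ _ e He); [|exact D4x|apply MX'].
    intros t Ht; rewrite (Lx t Ht), Ut_PM, Ev; reflexivity.
  - eapply (dpl_unique_local (fun t => fst (snd (u x t))) (fun t => cp true (Mf d n x t)) y _ _ e He); [|exact D3y|apply MY'].
    intros t Ht; rewrite (Ly t Ht), Ut_PM, Ev; reflexivity.
  - eapply (dpl_unique_local (fun t => snd (snd (u x t))) (fun t => cp false (Mf d n x t)) y _ _ e He); [|exact D4y|apply MY'].
    intros t Ht; rewrite (Ly t Ht), Ut_PM, Ev; reflexivity.
  - eapply (dpl_unique_local (fun t => fst (fst (u t y))) (fun t => cp true (Mf d n t y)) x _ _ e He); [|exact D1x|apply MX'].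
    intros t Ht; rewrite (Lx t Ht), Ut_PM, Ev; reflexivity.
  - eapply (dpl_unique_local (fun t => snd (fst (u t y))) (fun t => cp false (Mf d n t y)) x _ _ e He); [|exact D2x|apply MX'].
    intros t Ht; rewrite (Lx t Ht), Ut_PM, Ev; reflexivity.
  - eapply (dpl_unique_local (fun t => fst (fst (u x t))) (fun t => cp true (Mf d n x t)) y _ _ e He); [|exact D1y|apply MY'].
    intros t Ht; rewrite (Ly t Ht), Ut_PM, Ev; reflexivity.
  - eapply (dpl_unique_local (fun t => snd (fst (u x t))) (fun t => cp false (Mf d n x t)) y _ _ e He); [|exact D2y|apply MY'].
    intros t Ht; rewrite (Ly t Ht), Ut_PM, Ev; reflexivity.
  - eapply (dpl_unique_local (fun t => fst (snd (u t y))) (fun t => cp true (Pf n t y)) x _ _ e He); [|exact D3x|apply P_dx].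
    intros t Ht; rewrite (Lx t Ht), Ut_PM, Ev; reflexivity.
  - eapply (dpl_unique_local (fun t => snd (snd (u t y))) (fun t => cp false (Pf n t y)) x _ _ e He); [|exact D4x|apply P_dx].
    intros t Ht; rewrite (Lx t Ht), Ut_PM, Ev; reflexivity.
  - eapply (dpl_unique_local (fun t => fst (snd (u x t))) (fun t => cp true (Pf n x t)) y _ _ e He); [|exact D3y|apply P_dy].
    intros t Ht; rewrite (Ly t Ht), Ut_PM, Ev; reflexivity.
  - eapply (dpl_unique_local (fun t => snd (snd (u x t))) (fun t => cp false (Pf n x t)) y _ _ e He); [|exact D4y|apply P_dy].
    intros t Ht; rewrite (Ly t Ht), Ut_PM, Ev; reflexivity.
Qed.

End Fin.

Lemma WzP_ne n x y : (1 <= n)%nat -> 0 < Rnorm x y -> Wz (aPx n x y) (aPy n x y) <> C0.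
Proof.
  intros Hn Hp E. rewrite WzP in E. apply (f_equal Cnorm2) in E.
  rewrite Cnorm2_scal, Cnorm2_pow, Cnorm2_xy in E. unfold Cnorm2, C0 in E; cbn [fst snd] in E.
  assert (HF : 0 < F4 n) by (unfold F4; apply exp_pos).
  assert (Hnr : 1 <= INR n) by (apply (le_INR 1); lia).
  assert (0 < (F4 n * INR n)^2) by (apply pow_lt; nra).
  assert (0 < (Rnorm x y ^ 2) ^ (n-1)) by (apply pow_lt; apply pow_lt; auto).
  assert (0 < (F4 n * INR n) ^ 2 * (Rnorm x y ^ 2) ^ (n - 1)) by (apply Rmult_lt_0_compat; auto).
  lra.
Qed.

Theorem mainTheorem4 (s : R -> R) (u : R -> R -> Cx * Cx) :
  cutoff s ->
  GC_map s r4 p4 F4 u ->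
  smooth_map D1 u /\
  vanishes_inf_order u /\
  (forall (x y : R) (a1x a1y a2x a2y : Cx),
     D1 x y -> 0 < Rnorm x y ->
     has_dx (u1 u) x y a1x -> has_dy (u1 u) x y a1y ->
     has_dx (u2 u) x y a2x -> has_dy (u2 u) x y a2y ->
     (Wz a1x a1y, Wz a2x a2y) <> (C0, C0)) /\
  (exists C1 : R, 0 < C1 /\
     forall (x y : R) (a1x a1y a2x a2y : Cx),
       D1 x y -> 0 < Rnorm x y ->
       has_dx (u1 u) x y a1x -> has_dy (u1 u) x y a1y ->
       has_dx (u2 u) x y a2x -> has_dy (u2 u) x y a2y ->
       C2norm (Wzbar a1x a1y) (Wzbar a2x a2y) / C2norm (Wz a1x a1y) (Wz a2x a2y)
         <= C1 / (- (ln (Rnorm x y) / ln 2))).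
Proof.
  intros Hcut HG.
  destruct Hcut as [d [Hd0 [Hd [Hz [_ [_ [_ [_ Ho]]]]]]]]. subst s.
  split; [|split; [|split]].
  - apply (part1 d Hd Hz Ho u HG).
  - apply (part2 d Hd Hz Ho u HG).
  - intros x y a1x a1y a2x a2y HD Hp H1 H2 H3 H4.
    destruct (u_rep d Hz Ho u HG x y HD Hp) as [n [e [Hn [He Hb]]]].
    pose proof (get_derivs d Hd Hz Ho u x y n e a1x a1y a2x a2y Hn He Hb H1 H2 H3 H4) as G.
    destruct (Nat.even n); destruct G as [-> [-> [-> ->]]]; intro E;
      pose proof (f_equal fst E) as E1; pose proof (f_equal snd E) as E2; cbn [fst snd] in E1, E2.
    + apply (WzP_ne n x y Hn Hp E1).
    + apply (WzP_ne n x y Hn Hp E2).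
  - destruct (dt_bounded d Hd 1) as [M1 [HM1 HMb]].
    exists (16 * M1 + 1). split. lra.
    intros x y a1x a1y a2x a2y HD Hp H1 H2 H3 H4.
    destruct (u_rep d Hz Ho u HG x y HD Hp) as [n [e [Hn [He Hb]]]].
    assert (HE : inE n x y) by (apply Hb; rewrite !Rminus_diag, Rnorm_00; auto).
    assert (Hg : Rabs (gv d n x y) <= M1) by (unfold gv; apply HMb).
    pose proof (get_derivs d Hd Hz Ho u x y n e a1x a1y a2x a2y Hn He Hb H1 H2 H3 H4) as G.
    destruct (Nat.even n); destruct G as [-> [-> [-> ->]]].
    + apply (ratio_core d n x y Hn HE HD M1 HM1 Hg).
    + rewrite (C2norm_comm (Wzbar (aMx d n x y) (aMy d n x y))), (C2norm_comm (Wz (aMx d n x y) (aMy d n x y))).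
      apply (ratio_core d n x y Hn HE HD M1 HM1 Hg).
Qed.
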